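(* Fix $J\in\mathbb Z_{>0}$ and $i_1,j_1,i_2,j_2\in\mathbb Z_{\ge0}$, and let $\mathcal K,\mathcal K'\in\{0,1\}^J$ with $|\mathcal K|=|\mathcal K'|=j_2$. Then $W_J(i_1,j_1;i_2,\mathcal K\mid v,\lambda)=W_J(i_1,j_1;i_2,\mathcal K'\mid v,\lambda)$ for all $v,\lambda,\Lambda$.
   Context: Fix $\eta,\tau\in\mathbb C$, $\operatorname{Im}\tau>0$. $f(z)$ denotes either the theta function $\theta(z)=-\sum_{j\in\mathbb Z}\exp\big(\pi\mathbf i\tau(j+\tfrac12)^2+2\pi\mathbf i(j+\tfrac12)(z+\tfrac12)\big)$ or $\sin(\pi z)$ (either choice). For $v,\lambda,\Lambda\in\mathbb C$ and $k\in\mathbb Z_{\ge0}$ define the unfused weights $W_1(k,0;k,0\mid v,\lambda,\Lambda)=\frac{f(\eta(\Lambda-2k)-v)f(\lambda+2k\eta)}{f(\eta\Lambda-v)f(\lambda)}$, $W_1(k,1;k+1,0\mid\cdot)=\frac{f(v+\lambda+\eta(2k+2-\Lambda))f(2\eta)}{f(\eta\Lambda-v)f(\lambda)}$, $W_1(k,0;k-1,1\mid\cdot)=\frac{f(\lambda-v+\eta(2k-2-\Lambda))f(2\eta(\Lambda+1-k))f(2k\eta)}{f(\eta\Lambda-v)f(\lambda)f(2\eta)}$ ($k\ge1$), $W_1(k,1;k,1\mid\cdot)=\frac{f(\eta(2k-\Lambda)-v)f(\lambda+2\eta(k-\Lambda))}{f(\eta\Lambda-v)f(\lambda)}$, and $W_1(i_1,j_1;i_2,j_2\mid\cdot)=0$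 for all other quadruples. Column weights: for $J\ge1$, $i_1,i_2\ge0$, $\mathcal J_1=(j_{1,1},\dots,j_{1,J})$, $\mathcal J_2=(j_{2,1},\dots,j_{2,J})\in\{0,1\}^J$, put $i^{(1)}=i_1$, $i^{(k+1)}=i^{(k)}+j_{1,k}-j_{2,k}$; dynamical parameters $\Phi_J=\lambda$ and, for $1\le k<J$, $\Phi_k=\Phi_{k+1}-2\eta$ if $j_{1,k+1}=0$ and $\Phi_k=\Phi_{k+1}+2\eta$ if $j_{1,k+1}=1$. Then $W_J(i_1,\mathcal J_1;i_2,\mathcal J_2\mid v,\lambda)=\prod_{k=1}^JW_1(i^{(k)},j_{1,k};i^{(k+1)},j_{2,k}\mid v+2\eta(k-1),\Phi_k,\Lambda)$ if all $i^{(k)}\ge0$ and $i^{(J+1)}=i_2$, and $0$ otherwise (the dependence on $\Lambda$ is suppressed). For $\mathcal K\in\{0,1\}^J$, $W_J(i_1,j_1;i_2,\mathcal K\mid v,\lambda)=\sum_{\mathcal J_1\in\{0,1\}^J,\,|\mathcal J_1|=j_1}W_J(i_1,\mathcal J_1;i_2,\mathcal K\mid v,\lambda)$, where $|\cdot|$ is the number of ones. *)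

(* Defs.v *)
From Stdlib Require Import Reals ZArith List Bool ClassicalEpsilon.
Import ListNotations.
Open Scope R_scope.

Record CC : Type := mkC { re : R; im : R }.

Definition CR (x : R) : CC := mkC x 0.
Definition C0 : CC := CR 0.
Definition C1 : CC := CR 1.
Definition Ci : CC := mkC 0 1.
Definition Cadd (z w : CC) : CC := mkC (re z + re w) (im z + im w).
Definition Copp (z : CC) : CC := mkC (- re z) (- im z).
Definition Csub (z w : CC) : CC := Cadd z (Copp w).
Definition Cmul (z w : CC) : CC :=
  mkC (re z * re w - im z * im w) (re z * im w + im z * re w).
Definition Cinv (z : CC) : CC :=
  let d := re z * re z + im z * im z in mkC (re z / d) (- im z / d).
Definition Cdiv (z w : CC) : CC := Cmul z (Cinv w).
Definition CZ (n : Z) : CC := CR (IZR n).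
Definition Cnat (n : nat) : CC := CR (INR n).

Definition Cexp (z : CC) : CC := mkC (exp (re z) * cos (im z)) (exp (re z) * sin (im z)).
Definition Csin (z : CC) : CC :=
  mkC (sin (re z) * cosh (im z)) (cos (re z) * sinh (im z)).

(** * The theta function
   theta z = - sum_{j in Z} exp(pi i tau (j+1/2)^2 + 2 pi i (j+1/2)(z+1/2)),
   defined as the limit of the symmetric partial sums (which converge
   absolutely when Im tau > 0). *)
Definition theta_term (tau z : CC) (j : Z) : CC :=
  let h := CR (IZR j + / 2) in
  let piC := CR PI in
  Cexp (Cadd (Cmul (Cmul (Cmul piC Ci) tau) (Cmul h h))
             (Cmul (Cmul (Cmul (CR 2) piC) Ci) (Cmul h (Cadd z (CR (/ 2)))))).

(* sum_{j = -N}^{N} theta_term tau z j *)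
Fixpoint theta_aux (tau z : CC) (N : nat) (n : nat) : CC :=
  match n with
  | O => C0
  | S n' => Cadd (theta_aux tau z N n') (theta_term tau z (Z.of_nat n' - Z.of_nat N)%Z)
  end.
Definition theta_partial (tau z : CC) (N : nat) : CC :=
  theta_aux tau z N (2 * N + 1).

Definition theta (tau z : CC) : CC :=
  Copp (epsilon (inhabits C0)
          (fun L => Un_cv (fun N => re (theta_partial tau z N)) (re L) /\
                    Un_cv (fun N => im (theta_partial tau z N)) (im L))).

Inductive fchoice : Type := ThetaF | SinF.
Definition ff (fc : fchoice) (tau z : CC) : CC :=
  match fc with
  | ThetaF => theta tau z
  | SinF => Csin (Cmul (CR PI) z)
  end.

Section Weights.
Variables (fc : fchoice) (tau eta : CC).
Let f := ff fc tau.
Let two_eta := Cmul (CR 2) eta.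

Definition W1 (k : nat) (a : bool) (k' : nat) (b : bool) (v lam Lam : CC) : CC :=
  let den := Cmul (f (Csub (Cmul eta Lam) v)) (f lam) in
  match a, b with
  | false, false =>
      if Nat.eqb k' k then
        Cdiv (Cmul (f (Csub (Cmul eta (Csub Lam (Cmul (CR 2) (Cnat k)))) v))
                   (f (Cadd lam (Cmul (Cmul (CR 2) (Cnat k)) eta)))) den
      else C0
  | true, false =>
      if Nat.eqb k' (S k) then
        Cdiv (Cmul (f (Cadd (Cadd v lam)
                            (Cmul eta (Csub (Cadd (Cmul (CR 2) (Cnat k)) (CR 2)) Lam))))
                   (f two_eta)) den
      else C0
  | false, true =>
      if andb (1 <=? k)%nat (Nat.eqb (S k') k) then
        Cdiv (Cmul (Cmul (f (Cadd (Csub lam v)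
                                  (Cmul eta (Csub (Csub (Cmul (CR 2) (Cnat k)) (CR 2)) Lam))))
                         (f (Cmul two_eta (Csub (Cadd Lam C1) (Cnat k)))))
                   (f (Cmul two_eta (Cnat k))))
             (Cmul den (f two_eta))
      else C0
  | true, true =>
      if Nat.eqb k' k then
        Cdiv (Cmul (f (Csub (Cmul eta (Csub (Cmul (CR 2) (Cnat k)) Lam)) v))
                   (f (Cadd lam (Cmul two_eta (Csub (Cnat k) Lam))))) den
      else C0
  end.

(** Dynamical parameters: for J1 = [j_{1,1}; ...; j_{1,J}], returns
    [Phi_1; ...; Phi_J] with Phi_J = lam and
    Phi_k = Phi_{k+1} - 2 eta if j_{1,k+1} = 0, Phi_{k+1} + 2 eta if j_{1,k+1} = 1. *)
Fixpoint phis (lam : CC) (l : list bool) : list CC :=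
  match l with
  | [] => []
  | _ :: rest =>
      let ps := phis lam rest in
      match rest, ps with
      | b :: _, p :: _ => (if b then Cadd p two_eta else Csub p two_eta) :: ps
      | _, _ => [lam]
      end
  end.

Definition bZ (b : bool) : Z := if b then 1%Z else 0%Z.

(** product over k of W1(i^(k), j_{1,k}; i^(k+1), j_{2,k} | v + 2 eta (k-1), Phi_k, Lam),
    with i the current height i^(k); returns 0 if some height is negative or
    the final height differs from i2. *)
Fixpoint colW_aux (Lam : CC) (i2 : nat) (i : Z) (l1 l2 : list bool) (ps : list CC) (v : CC) : CC :=
  match l1, l2, ps with
  | [], [], [] => if Z.eqb i (Z.of_nat i2) then C1 else C0
  | a :: l1', b :: l2', p :: ps' =>
      let i' := (i + bZ a - bZ b)%Z in
      if Z.ltb i 0 then C0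
      else Cmul (W1 (Z.to_nat i) a (Z.to_nat i') b v p Lam)
                (colW_aux Lam i2 i' l1' l2' ps' (Cadd v two_eta))
  | _, _, _ => C0
  end.

Definition WJ (i1 : nat) (J1 : list bool) (i2 : nat) (J2 : list bool) (v lam Lam : CC) : CC :=
  if Nat.eqb (length J1) (length J2)
  then colW_aux Lam i2 (Z.of_nat i1) J1 J2 (phis lam J1) v
  else C0.

End Weights.

Definition ones (l : list bool) : nat := length (filter (fun b => b) l).

Fixpoint blists (n : nat) : list (list bool) :=
  match n with
  | O => [[]]
  | S n' => map (cons false) (blists n') ++ map (cons true) (blists n')
  end.

Definition Csum (l : list CC) : CC := fold_right Cadd C0 l.

Definition WJsum (fc : fchoice) (tau eta : CC) (i1 j1 i2 : nat) (K : list bool)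
    (v lam Lam : CC) : CC :=
  Csum (map (fun J1 => WJ fc tau eta i1 J1 i2 K v lam Lam)
            (filter (fun J1 => Nat.eqb (ones J1) j1) (blists (length K)))).

(* Main.v *)
From Stdlib Require Import Reals ZArith List Lra Field Lia Classical ClassicalEpsilon Permutation.
Require Import Defs.
Import ListNotations.
Open Scope R_scope.

Lemma CC_ext (z w : CC) : re z = re w -> im z = im w -> z = w.
Proof. destruct z, w; simpl; intros; subst; reflexivity. Qed.

Ltac ceq := apply CC_ext; cbn [re im Cadd Cmul Csub Copp CR C0 C1 Cnat CZ Cdiv Cinv]; rewrite ?S_INR; field.

Lemma C1_neq_C0 : C1 <> C0.
Proof. intro H. assert (re C1 = re C0) by (rewrite H; reflexivity). simpl in H0. lra. Qed.

Lemma Cinv_l (z : CC) : z <> C0 -> Cmul (Cinv z) z = C1.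
Proof.
  intro Hz. assert (Hd : re z * re z + im z * im z <> 0).
  { intro H. apply Hz. destruct z as [a b]; simpl in *. apply CC_ext; simpl; nra. }
  destruct z as [a b]; simpl in *. unfold Cinv, Cmul, C1, CR; simpl. apply CC_ext; simpl; field; auto.
Qed.

Lemma CC_ring : ring_theory C0 C1 Cadd Cmul Csub Copp (@eq CC).
Proof.
  constructor; intros; ceq.
Qed.

Lemma CC_field : field_theory C0 C1 Cadd Cmul Csub Copp Cdiv Cinv (@eq CC).
Proof.
  constructor.
  - exact CC_ring.
  - exact C1_neq_C0.
  - intros; reflexivity.
  - exact Cinv_l.
Qed.

Add Field CCfield : CC_field.

Goal forall a b : CC, b <> C0 -> Cmul (Cdiv a b) b = a.
Proof. intros. field. auto. Qed.

Section Comb.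
Context (fc : fchoice) (tau eta lam Lam : CC) (i2 : nat).

Definition phiF (c n : nat) : CC :=
  Cadd lam (Cmul (Cmul (CR 2) eta) (CR (2 * INR c - INR n))).

Fixpoint Sr (i : Z) (c : nat) (K : list bool) (v : CC) : CC :=
  match K with
  | [] => match c with O => if Z.eqb i (Z.of_nat i2) then C1 else C0 | S _ => C0 end
  | b :: K' =>
    let T a c' := if Z.ltb i 0 then C0 else
        Cmul (W1 fc tau eta (Z.to_nat i) a (Z.to_nat (i + bZ a - bZ b)) b v (phiF c' (length K')) Lam)
             (Sr (i + bZ a - bZ b) c' K' (Cadd v (Cmul (CR 2) eta))) in
    Cadd (T false c) (match c with O => C0 | S c' => T true c' end)
  end.

Lemma phis_ne a l : phis eta lam (a :: l) <> [].
Proof.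
  destruct l as [|b l]. discriminate.
  change (phis eta lam (a :: b :: l)) with
   (let ps := phis eta lam (b :: l) in
    match (b :: l), ps with
    | b' :: _, p :: _ => (if b' then Cadd p (Cmul (CR 2) eta) else Csub p (Cmul (CR 2) eta)) :: ps
    | _, _ => [lam] end).
  cbv zeta. destruct (phis eta lam (b :: l)); discriminate.
Qed.

Lemma phis_unfold a b l : phis eta lam (a :: b :: l) =
  (if b then Cadd (hd lam (phis eta lam (b :: l))) (Cmul (CR 2) eta)
   else Csub (hd lam (phis eta lam (b :: l))) (Cmul (CR 2) eta)) :: phis eta lam (b :: l).
Proof.
  change (phis eta lam (a :: b :: l)) with
   (let ps := phis eta lam (b :: l) in
    match (b :: l), ps with
    | b' :: _, p :: _ => (if b' then Cadd p (Cmul (CR 2) eta) else Csub p (Cmul (CR 2) eta)) :: ps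
    | _, _ => [lam] end).
  cbv zeta. pose proof (phis_ne b l) as H. destruct (phis eta lam (b :: l)). congruence. reflexivity.
Qed.

Lemma phis_cons l : forall a, phis eta lam (a :: l) = phiF (ones l) (length l) :: phis eta lam l.
Proof.
  induction l as [|b l IH]; intro a.
  - simpl. f_equal. unfold phiF, ones; simpl length; simpl filter; simpl INR. ceq.
  - rewrite phis_unfold, (IH b). simpl hd. f_equal.
    unfold phiF, ones. destruct b; simpl filter; simpl length;
    rewrite ?S_INR.
    all: ceq.
Qed.

Lemma colW_cons i a J1 b K v :
  colW_aux fc tau eta Lam i2 i (a :: J1) (b :: K) (phis eta lam (a :: J1)) v =
  if Z.ltb i 0 then C0 else
   Cmul (W1 fc tau eta (Z.to_nat i) a (Z.to_nat (i + bZ a - bZ b)) b v (phiF (ones J1) (length J1)) Lam)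
        (colW_aux fc tau eta Lam i2 (i + bZ a - bZ b) J1 K (phis eta lam J1) (Cadd v (Cmul (CR 2) eta))).
Proof. rewrite phis_cons. reflexivity. Qed.

Lemma blists_len n l : In l (blists n) -> length l = n.
Proof.
  revert l; induction n as [|n IH]; intros l H; simpl in H.
  - destruct H as [<-|[]]; reflexivity.
  - apply in_app_or in H. destruct H as [H|H]; apply in_map_iff in H;
    destruct H as [l' [<- H]]; simpl; f_equal; auto.
Qed.

Lemma Csum_app l1 l2 : Csum (l1 ++ l2) = Cadd (Csum l1) (Csum l2).
Proof. induction l1; simpl. ceq. rewrite IHl1. ceq. Qed.

Lemma Csum_scale A (g : list bool -> CC) l :
  Csum (map (fun x => Cmul A (g x)) l) = Cmul A (Csum (map g l)).
Proof. induction l; simpl. ceq. rewrite IHl. ceq. Qed.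

Lemma Csum_zero (l : list (list bool)) : Csum (map (fun _ => C0) l) = C0.
Proof. induction l; simpl. reflexivity. rewrite IHl. ceq. Qed.

Lemma filter_map_comm {A B} (p : B -> bool) (g : A -> B) l :
  filter p (map g l) = map g (filter (fun x => p (g x)) l).
Proof. induction l; simpl. reflexivity. destruct (p (g a)); simpl; rewrite IHl; reflexivity. Qed.

Lemma filter_false {A} (l : list A) : filter (fun _ => false) l = [].
Proof. induction l; auto. Qed.

Lemma WJ_Sr K : forall i c v,
  Csum (map (fun J1 => colW_aux fc tau eta Lam i2 i J1 K (phis eta lam J1) v)
            (filter (fun J1 => Nat.eqb (ones J1) c) (blists (length K)))) = Sr i c K v.
Proof.
  induction K as [|b K IH]; intros i c v.
  - destruct c; simpl.
    + destruct (Z.eqb i (Z.of_nat i2)); ceq.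
    + reflexivity.
  - simpl length. simpl blists. rewrite filter_app, !filter_map_comm, map_app, Csum_app, !map_map.
    simpl Sr.
    assert (Hb : forall a c',
      Csum (map (fun x => colW_aux fc tau eta Lam i2 i (a :: x) (b :: K) (phis eta lam (a :: x)) v)
         (filter (fun J1 => Nat.eqb (ones J1) c') (blists (length K)))) =
      (if Z.ltb i 0 then C0 else
        Cmul (W1 fc tau eta (Z.to_nat i) a (Z.to_nat (i + bZ a - bZ b)) b v (phiF c' (length K)) Lam)
             (Sr (i + bZ a - bZ b) c' K (Cadd v (Cmul (CR 2) eta))))).
    { intros a c'. rewrite <- IH.
      rewrite (map_ext_in _ (fun x => if Z.ltb i 0 then C0 else
        Cmul (W1 fc tau eta (Z.to_nat i) a (Z.to_nat (i + bZ a - bZ b)) b v (phiF c' (length K)) Lam)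
        (colW_aux fc tau eta Lam i2 (i + bZ a - bZ b) x K (phis eta lam x) (Cadd v (Cmul (CR 2) eta))))).
      - destruct (Z.ltb i 0). apply Csum_zero. apply Csum_scale.
      - intros x Hx. apply filter_In in Hx. destruct Hx as [Hx1 Hx2].
        apply Nat.eqb_eq in Hx2. apply blists_len in Hx1.
        rewrite colW_cons, Hx1, Hx2. reflexivity. }
    change (fun x : list bool => Nat.eqb (ones (false :: x)) c) with (fun x : list bool => Nat.eqb (ones x) c).
    rewrite (Hb false c). destruct c as [|c'].
    + change (fun x : list bool => Nat.eqb (ones (true :: x)) 0) with (fun x : list bool => false).
      rewrite filter_false. simpl. reflexivity.
    + change (fun x : list bool => Nat.eqb (ones (true :: x)) (S c')) with (fun x : list bool => Nat.eqb (ones x) c').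
      rewrite (Hb true c'). reflexivity.
Qed.

Definition hstep (a b : bool) (n : nat) : option nat :=
  match a, b with
  | false, false => Some n
  | true, false => Some (S n)
  | false, true => match n with O => None | S m => Some m end
  | true, true => Some n
  end.

Fixpoint Sn (n c : nat) (K : list bool) (v : CC) : CC :=
  match K with
  | [] => match c with O => if Nat.eqb n i2 then C1 else C0 | S _ => C0 end
  | b :: K' =>
    let T a c' := match hstep a b n with None => C0 | Some n' =>
        Cmul (W1 fc tau eta n a n' b v (phiF c' (length K')) Lam)
             (Sn n' c' K' (Cadd v (Cmul (CR 2) eta))) end in
    Cadd (T false c) (match c with O => C0 | S c' => T true c' end)
  end.

Lemma Sr_neg K : forall i c v, (i < 0)%Z -> Sr i c K v = C0.
Proof.
  destruct K as [|b K]; intros i c v Hi; simpl.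
  - destruct c; auto. destruct (Z.eqb_spec i (Z.of_nat i2)); auto. lia.
  - assert (E : Z.ltb i 0 = true) by (apply Z.ltb_lt; lia). rewrite E.
    destruct c; ceq.
Qed.

Lemma hstep_Z a b n n' : hstep a b n = Some n' -> (Z.of_nat n + bZ a - bZ b = Z.of_nat n')%Z.
Proof. destruct a, b, n; cbn [hstep bZ]; intro H; inversion H; subst; lia. Qed.

Lemma Sr_Sn K : forall n c v, Sr (Z.of_nat n) c K v = Sn n c K v.
Proof.
  induction K as [|b K IH]; intros n c v.
  - simpl. destruct c; auto. destruct (Z.eqb_spec (Z.of_nat n) (Z.of_nat i2)), (Nat.eqb_spec n i2); auto; lia.
  - cbn [Sr Sn]. assert (E : Z.ltb (Z.of_nat n) 0 = false) by (apply Z.ltb_ge; lia). rewrite E.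
    assert (HT : forall a c', Cmul (W1 fc tau eta (Z.to_nat (Z.of_nat n)) a (Z.to_nat (Z.of_nat n + bZ a - bZ b)) b v
              (phiF c' (length K)) Lam) (Sr (Z.of_nat n + bZ a - bZ b) c' K (Cadd v (Cmul (CR 2) eta))) =
       match hstep a b n with None => C0 | Some n' =>
        Cmul (W1 fc tau eta n a n' b v (phiF c' (length K)) Lam)
             (Sn n' c' K (Cadd v (Cmul (CR 2) eta))) end).
    { intros a c'. destruct (hstep a b n) as [n'|] eqn:Hs.
      - rewrite (hstep_Z _ _ _ _ Hs), Nat2Z.id, Nat2Z.id, IH. reflexivity.
      - rewrite Sr_neg. ceq. destruct a, b, n; simpl in Hs; try discriminate. simpl. lia. }
    destruct c; rewrite ?HT; reflexivity.
Qed.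
End Comb.

Definition LC (v P L e h : CC) (cv cP cL ce ch : R) : CC :=
  Cadd (Cmul (CR cv) v) (Cadd (Cmul (CR cP) P) (Cadd (Cmul (CR cL) L)
    (Cadd (Cmul (CR ce) e) (Cmul (CR ch) (Cmul e h))))).

Ltac ceq2 := repeat match goal with x := _ |- _ => subst x end; try unfold LC; try unfold phiF; apply CC_ext; cbn [re im Cadd Cmul Csub Copp CR C0 C1 Cnat CZ Cdiv Cinv]; rewrite ?S_INR; lra.

Definition Ftt (f : CC -> CC) := forall x y u w,
  Cmul (Cmul (f (Cadd x y)) (f (Csub x y))) (Cmul (f (Cadd u w)) (f (Csub u w))) =
  Cadd (Cmul (Cmul (f (Cadd x w)) (f (Csub x w))) (Cmul (f (Cadd u y)) (f (Csub u y))))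
       (Cmul (Cmul (f (Cadd x u)) (f (Csub x u))) (Cmul (f (Cadd y w)) (f (Csub y w)))).

Lemma lc2 (Lh Rh a1 b1 a2 b2 c1 c2 : CC) :
  Csub Lh Rh = Cadd (Cmul c1 (Csub a1 b1)) (Cmul c2 (Csub a2 b2)) -> a1 = b1 -> a2 = b2 -> Lh = Rh.
Proof.
  intros H E1 E2. subst. assert (Csub Lh Rh = C0) by (rewrite H; ceq).
  transitivity (Cadd Rh (Csub Lh Rh)). ceq. rewrite H0. ceq.
Qed.

Lemma lc3 (Lh Rh a1 b1 a2 b2 c1 c2 z c3 : CC) :
  Csub Lh Rh = Cadd (Cadd (Cmul c1 (Csub a1 b1)) (Cmul c2 (Csub a2 b2))) (Cmul c3 z) ->
  a1 = b1 -> a2 = b2 -> z = C0 -> Lh = Rh.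
Proof.
  intros H E1 E2 E3. subst. assert (Csub Lh Rh = C0) by (rewrite H; ceq).
  transitivity (Cadd Rh (Csub Lh Rh)). ceq. rewrite H0. ceq.
Qed.

Section Local.
Context (fc : fchoice) (tau eta lam Lam : CC).
Notation f := (ff fc tau).
Notation te := (Cmul (CR 2) eta).

Ltac canon t := match t with ff ?a ?b ?e =>
  repeat match goal with |- context[ff a b ?x] =>
    tryif constr_eq x e then fail else
    (let E := fresh in assert (E : ff a b x = ff a b e) by (f_equal; ceq2); rewrite E; clear E) end end.
Ltac canon_in t H := match t with ff ?a ?b ?e =>
  repeat match type of H with context[ff a b ?x] =>
    tryif constr_eq x e then fail else
    (let E := fresh in assert (E : ff a b x = ff a b e) by (f_equal; ceq2); rewrite E in H; clear E) end end.

Ltac canonLC v P L h a b c d e := canon (ff fc tau (LC v P L eta h a b c d e)).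
Ltac canonLC_in v P L h a b c d e H := canon_in (ff fc tau (LC v P L eta h a b c d e)) H.

Lemma L1S (Hf : Ftt f) m k c2 v :
  let F := fun cv cP cL ce ch => f (LC v (phiF eta lam c2 k) (Cmul eta Lam) eta (Cnat (S m)) cv cP cL ce ch) in
  F 0 0 0 2 0 <> C0 -> F (-1) 0 1 0 0 <> C0 -> F 0 1 0 (-2) 0 <> C0 ->
  F (-1) 0 1 (-2) 0 <> C0 -> F 0 1 0 0 0 <> C0 -> F 0 1 0 2 0 <> C0 ->
 Cadd (Cmul (W1 fc tau eta (S m) true (S (S m)) false v (phiF eta lam c2 (S k)) Lam)
            (W1 fc tau eta (S (S m)) false (S m) true (Cadd v te) (phiF eta lam c2 k) Lam))
      (Cmul (W1 fc tau eta (S m) false (S m) false v (phiF eta lam (S c2) (S k)) Lam)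
            (W1 fc tau eta (S m) true (S m) true (Cadd v te) (phiF eta lam c2 k) Lam)) =
 Cadd (Cmul (W1 fc tau eta (S m) true (S m) true v (phiF eta lam c2 (S k)) Lam)
            (W1 fc tau eta (S m) false (S m) false (Cadd v te) (phiF eta lam c2 k) Lam))
      (Cmul (W1 fc tau eta (S m) false m true v (phiF eta lam (S c2) (S k)) Lam)
            (W1 fc tau eta m true (S m) false (Cadd v te) (phiF eta lam c2 k) Lam)).
Proof.
  intros F N2 N3 N4 N8 N9 N12. unfold F in *; clear F.
  unfold W1. cbn -[Cmul Cdiv Cadd Csub ff Cnat CR phiF]. rewrite ?Nat.eqb_refl.
  set (P := phiF eta lam c2 k) in *. set (L := Cmul eta Lam) in *. set (h := Cnat (S m)) in *.
  unfold W1. cbn -[Cmul Cdiv Cadd Csub ff Cnat CR phiF]. rewrite ?Nat.eqb_refl.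
  pose proof (Hf (LC v P L eta h 0 1 (-1) (-1) 2) (LC v P L eta h (-1) 0 0 (-1) 0)
                 (LC v P L eta h 0 0 1 1 0) (LC v P L eta h 0 0 1 (-1) (-2))) as H1.
  pose proof (Hf (LC v P L eta h (-/2) (/2) (/2) 1 0) (LC v P L eta h (-/2) (/2) (-3/2) (-1) 2)
                 (LC v P L eta h (/2) (/2) (-/2) 1 2) (LC v P L eta h (-/2) (-/2) (/2) (-1) 0)) as H2.
  canonLC v P L h 1 1 (-1) 0 2.
  canonLC v P L h 0 0 0 2 0.
  canonLC v P L h (-1) 0 1 0 0.
  canonLC v P L h 0 1 0 (-2) 0.
  canonLC v P L h (-1) 1 (-1) (-2) 2.
  canonLC v P L h 0 0 2 0 (-2).
  canonLC v P L h 0 0 0 2 2.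
  canonLC v P L h (-1) 0 1 (-2) 0.
  canonLC v P L h 0 1 0 0 0.
  canonLC v P L h (-1) 0 1 0 (-2).
  canonLC v P L h 0 1 0 2 2.
  canonLC v P L h 0 1 0 2 0.
  canonLC v P L h (-1) 0 (-1) (-2) 2.
  canonLC v P L h 0 1 (-2) 0 2.
  canonLC v P L h (-1) 0 (-1) 0 2.
  canonLC v P L h 0 1 (-2) (-2) 2.
  canonLC v P L h (-1) 0 1 (-2) (-2).
  canonLC v P L h 0 1 0 0 2.
  canonLC v P L h (-1) 1 (-1) 0 2.
  canonLC v P L h 0 0 2 2 (-2).
  canonLC v P L h 0 0 0 0 2.
  canonLC v P L h 1 1 (-1) 2 2.
  canonLC_in v P L h 1 1 (-1) 0 2 H1. canonLC_in v P L h 1 1 (-1) 0 2 H2.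
  canonLC_in v P L h 0 0 0 2 0 H1. canonLC_in v P L h 0 0 0 2 0 H2.
  canonLC_in v P L h (-1) 0 1 0 0 H1. canonLC_in v P L h (-1) 0 1 0 0 H2.
  canonLC_in v P L h 0 1 0 (-2) 0 H1. canonLC_in v P L h 0 1 0 (-2) 0 H2.
  canonLC_in v P L h (-1) 1 (-1) (-2) 2 H1. canonLC_in v P L h (-1) 1 (-1) (-2) 2 H2.
  canonLC_in v P L h 0 0 2 0 (-2) H1. canonLC_in v P L h 0 0 2 0 (-2) H2.
  canonLC_in v P L h 0 0 0 2 2 H1. canonLC_in v P L h 0 0 0 2 2 H2.
  canonLC_in v P L h (-1) 0 1 (-2) 0 H1. canonLC_in v P L h (-1) 0 1 (-2) 0 H2.
  canonLC_in v P L h 0 1 0 0 0 H1. canonLC_in v P L h 0 1 0 0 0 H2.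
  canonLC_in v P L h (-1) 0 1 0 (-2) H1. canonLC_in v P L h (-1) 0 1 0 (-2) H2.
  canonLC_in v P L h 0 1 0 2 2 H1. canonLC_in v P L h 0 1 0 2 2 H2.
  canonLC_in v P L h 0 1 0 2 0 H1. canonLC_in v P L h 0 1 0 2 0 H2.
  canonLC_in v P L h (-1) 0 (-1) (-2) 2 H1. canonLC_in v P L h (-1) 0 (-1) (-2) 2 H2.
  canonLC_in v P L h 0 1 (-2) 0 2 H1. canonLC_in v P L h 0 1 (-2) 0 2 H2.
  canonLC_in v P L h (-1) 0 (-1) 0 2 H1. canonLC_in v P L h (-1) 0 (-1) 0 2 H2.
  canonLC_in v P L h 0 1 (-2) (-2) 2 H1. canonLC_in v P L h 0 1 (-2) (-2) 2 H2.
  canonLC_in v P L h (-1) 0 1 (-2) (-2) H1. canonLC_in v P L h (-1) 0 1 (-2) (-2) H2.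
  canonLC_in v P L h 0 1 0 0 2 H1. canonLC_in v P L h 0 1 0 0 2 H2.
  canonLC_in v P L h (-1) 1 (-1) 0 2 H1. canonLC_in v P L h (-1) 1 (-1) 0 2 H2.
  canonLC_in v P L h 0 0 2 2 (-2) H1. canonLC_in v P L h 0 0 2 2 (-2) H2.
  canonLC_in v P L h 0 0 0 0 2 H1. canonLC_in v P L h 0 0 0 0 2 H2.
  canonLC_in v P L h 1 1 (-1) 2 2 H1. canonLC_in v P L h 1 1 (-1) 2 2 H2.
  canonLC_in v P L h 1 0 1 2 0 H1. canonLC_in v P L h 1 0 1 2 0 H2.
  canonLC_in v P L h 0 1 (-2) 0 4 H1. canonLC_in v P L h 0 1 (-2) 0 4 H2.
  set (a1 := f (LC v P L eta h 1 1 (-1) 0 2)) in *.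
  set (a2 := f (LC v P L eta h 0 0 0 2 0)) in *.
  set (a3 := f (LC v P L eta h (-1) 0 1 0 0)) in *.
  set (a4 := f (LC v P L eta h 0 1 0 (-2) 0)) in *.
  set (a5 := f (LC v P L eta h (-1) 1 (-1) (-2) 2)) in *.
  set (a6 := f (LC v P L eta h 0 0 2 0 (-2))) in *.
  set (a7 := f (LC v P L eta h 0 0 0 2 2)) in *.
  set (a8 := f (LC v P L eta h (-1) 0 1 (-2) 0)) in *.
  set (a9 := f (LC v P L eta h 0 1 0 0 0)) in *.
  set (a10 := f (LC v P L eta h (-1) 0 1 0 (-2))) in *.
  set (a11 := f (LC v P L eta h 0 1 0 2 2)) in *.
  set (a12 := f (LC v P L eta h 0 1 0 2 0)) in *.
  set (a13 := f (LC v P L eta h (-1) 0 (-1) (-2) 2)) in *.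
  set (a14 := f (LC v P L eta h 0 1 (-2) 0 2)) in *.
  set (a15 := f (LC v P L eta h (-1) 0 (-1) 0 2)) in *.
  set (a16 := f (LC v P L eta h 0 1 (-2) (-2) 2)) in *.
  set (a17 := f (LC v P L eta h (-1) 0 1 (-2) (-2))) in *.
  set (a18 := f (LC v P L eta h 0 1 0 0 2)) in *.
  set (a19 := f (LC v P L eta h (-1) 1 (-1) 0 2)) in *.
  set (a20 := f (LC v P L eta h 0 0 2 2 (-2))) in *.
  set (a21 := f (LC v P L eta h 0 0 0 0 2)) in *.
  set (a22 := f (LC v P L eta h 1 1 (-1) 2 2)) in *.
  set (a23 := f (LC v P L eta h 1 0 1 2 0)) in *.
  set (a24 := f (LC v P L eta h 0 1 (-2) 0 4)) in *.
  refine (lc2 _ _ _ _ _ _ (Cinv (Cmul (Cmul a3 a4) (Cmul a8 a9))) (Copp (Cinv (Cmul (Cmul a3 a12) (Cmul a8 a9)))) _ H1 H2).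
  field. repeat split; assumption.
Qed.
Lemma Cmul_neq0 a b : a <> C0 -> b <> C0 -> Cmul a b <> C0.
Proof.
  intros Ha Hb H. apply Hb. transitivity (Cmul (Cinv a) (Cmul a b)). field. auto.
  rewrite H. ring.
Qed.

Lemma f0 (Hf : Ftt f) : f te <> C0 -> f C0 = C0.
Proof.
  intro N. pose proof (Hf eta eta eta eta) as H.
  assert (E1 : Cadd eta eta = te) by ceq. assert (E2 : Csub eta eta = C0) by ceq.
  rewrite E1, E2 in H.
  destruct (classic (f C0 = C0)) as [|Hc]; auto. exfalso.
  assert (Hn : Cmul (Cmul (f te) (f C0)) (Cmul (f te) (f C0)) <> C0) by
    (apply Cmul_neq0; apply Cmul_neq0; auto).
  apply Hn. transitivity (Csub (Cadd (Cmul (Cmul (f te) (f C0)) (Cmul (f te) (f C0))) (Cmul (Cmul (f te) (f C0)) (Cmul (f te) (f C0)))) (Cmul (Cmul (f te) (f C0)) (Cmul (f te) (f C0)))).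
  ceq. rewrite <- H at 1. ceq.
Qed.

Lemma L0 (Hf : Ftt f) m k c2 v :
  let F := fun cv cP cL ce ch => f (LC v (phiF eta lam c2 k) (Cmul eta Lam) eta (Cnat (S m)) cv cP cL ce ch) in
  F 0 0 0 2 0 <> C0 -> F (-1) 0 1 0 0 <> C0 -> F 0 1 0 (-2) 0 <> C0 ->
  F (-1) 0 1 (-2) 0 <> C0 -> F 0 1 0 0 0 <> C0 -> F 0 1 0 2 0 <> C0 ->
  Cmul (W1 fc tau eta (S m) false (S m) false v (phiF eta lam c2 (S k)) Lam)
       (W1 fc tau eta (S m) false m true (Cadd v te) (phiF eta lam c2 k) Lam) =
  Cmul (W1 fc tau eta (S m) false m true v (phiF eta lam c2 (S k)) Lam)
       (W1 fc tau eta m false m false (Cadd v te) (phiF eta lam c2 k) Lam).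
Proof.
  intros F N2 N3 N4 N8 N9 N12. unfold F in *; clear F.
  unfold W1. cbn -[Cmul Cdiv Cadd Csub ff Cnat CR phiF]. rewrite ?Nat.eqb_refl.
  set (P := phiF eta lam c2 k) in *. set (L := Cmul eta Lam) in *. set (h := Cnat (S m)) in *.
  canonLC v P L h (-1) 0 1 0 (-2).
  canonLC v P L h 0 1 0 (-2) 2.
  canonLC v P L h (-1) 0 1 0 0.
  canonLC v P L h 0 1 0 (-2) 0.
  canonLC v P L h (-1) 1 (-1) (-4) 2.
  canonLC v P L h 0 0 2 2 (-2).
  canonLC v P L h 0 0 0 0 2.
  canonLC v P L h (-1) 0 1 (-2) 0.
  canonLC v P L h 0 1 0 0 0.
  canonLC v P L h 0 0 0 2 0.
  field. repeat split; assumption.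
Qed.

Lemma L2 (Hf : Ftt f) m k c2 v :
  let F := fun cv cP cL ce ch => f (LC v (phiF eta lam c2 k) (Cmul eta Lam) eta (Cnat m) cv cP cL ce ch) in
  F 0 0 0 2 0 <> C0 -> F (-1) 0 1 0 0 <> C0 -> F 0 1 0 (-2) 0 <> C0 ->
  F (-1) 0 1 (-2) 0 <> C0 -> F 0 1 0 0 0 <> C0 -> F 0 1 0 2 0 <> C0 ->
  Cmul (W1 fc tau eta m true (S m) false v (phiF eta lam (S c2) (S k)) Lam)
       (W1 fc tau eta (S m) true (S m) true (Cadd v te) (phiF eta lam c2 k) Lam) =
  Cmul (W1 fc tau eta m true m true v (phiF eta lam (S c2) (S k)) Lam)
       (W1 fc tau eta m true (S m) false (Cadd v te) (phiF eta lam c2 k) Lam).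
Proof.
  intros F N2 N3 N4 N8 N9 N12. unfold F in *; clear F.
  unfold W1. cbn -[Cmul Cdiv Cadd Csub ff Cnat CR phiF]. rewrite ?Nat.eqb_refl.
  set (P := phiF eta lam c2 k) in *. set (L := Cmul eta Lam) in *. set (h := Cnat m) in *.
  canonLC v P L h 1 1 (-1) 4 2.
  canonLC v P L h 0 0 0 2 0.
  canonLC v P L h (-1) 0 1 0 0.
  canonLC v P L h 0 1 0 2 0.
  canonLC v P L h (-1) 0 (-1) 0 2.
  canonLC v P L h 0 1 (-2) 2 2.
  canonLC v P L h (-1) 0 1 (-2) 0.
  canonLC v P L h 0 1 0 0 0.
  field. repeat split; assumption.
Qed.

Lemma L1_0 (Hf : Ftt f) k c2 v :
  let F := fun cv cP cL ce ch => f (LC v (phiF eta lam c2 k) (Cmul eta Lam) eta (Cnat 0) cv cP cL ce ch) in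
  F 0 0 0 2 0 <> C0 -> F (-1) 0 1 0 0 <> C0 -> F 0 1 0 (-2) 0 <> C0 ->
  F (-1) 0 1 (-2) 0 <> C0 -> F 0 1 0 0 0 <> C0 -> F 0 1 0 2 0 <> C0 ->
  Cadd (Cmul (W1 fc tau eta 0 true 1 false v (phiF eta lam c2 (S k)) Lam)
            (W1 fc tau eta 1 false 0 true (Cadd v te) (phiF eta lam c2 k) Lam))
       (Cmul (W1 fc tau eta 0 false 0 false v (phiF eta lam (S c2) (S k)) Lam)
            (W1 fc tau eta 0 true 0 true (Cadd v te) (phiF eta lam c2 k) Lam)) =
  Cmul (W1 fc tau eta 0 true 0 true v (phiF eta lam c2 (S k)) Lam)
       (W1 fc tau eta 0 false 0 false (Cadd v te) (phiF eta lam c2 k) Lam).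
Proof.
  intros F N2 N3 N4 N8 N9 N12. unfold F in *; clear F.
  unfold W1. cbn -[Cmul Cdiv Cadd Csub ff Cnat CR phiF]. rewrite ?Nat.eqb_refl.
  set (P := phiF eta lam c2 k) in *. set (L := Cmul eta Lam) in *. set (h := Cnat 0) in *.
  canonLC v P L h 1 1 (-1) 0 2.
  canonLC v P L h 0 0 0 2 0.
  canonLC v P L h (-1) 0 1 0 0.
  canonLC v P L h 0 1 0 (-2) 0.
  canonLC v P L h (-1) 1 (-1) (-2) 2.
  canonLC v P L h 0 0 2 0 (-2).
  canonLC v P L h 0 0 0 2 2.
  canonLC v P L h (-1) 0 1 (-2) 0.
  canonLC v P L h 0 1 0 0 0.
  canonLC v P L h (-1) 0 1 0 (-2).
  canonLC v P L h 0 1 0 2 2.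
  canonLC v P L h 0 1 0 2 0.
  canonLC v P L h (-1) 0 (-1) (-2) 2.
  canonLC v P L h 0 1 (-2) 0 2.
  canonLC v P L h (-1) 0 (-1) 0 2.
  canonLC v P L h 0 1 (-2) (-2) 2.
  canonLC v P L h (-1) 0 1 (-2) (-2).
  canonLC v P L h 0 1 0 0 2.
  pose proof (Hf (LC v P L eta h 0 1 (-1) (-1) 2) (LC v P L eta h (-1) 0 0 (-1) 0)
                 (LC v P L eta h 0 0 1 1 0) (LC v P L eta h 0 0 1 (-1) (-2))) as H1.
  pose proof (Hf (LC v P L eta h (-/2) (/2) (/2) 1 0) (LC v P L eta h (-/2) (/2) (-3/2) (-1) 2)
                 (LC v P L eta h (/2) (/2) (-/2) 1 2) (LC v P L eta h (-/2) (-/2) (/2) (-1) 0)) as H2.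
  canonLC_in v P L h 1 1 (-1) 0 2 H1. canonLC_in v P L h 1 1 (-1) 0 2 H2.
  canonLC_in v P L h 0 0 0 2 0 H1. canonLC_in v P L h 0 0 0 2 0 H2.
  canonLC_in v P L h (-1) 0 1 0 0 H1. canonLC_in v P L h (-1) 0 1 0 0 H2.
  canonLC_in v P L h 0 1 0 (-2) 0 H1. canonLC_in v P L h 0 1 0 (-2) 0 H2.
  canonLC_in v P L h (-1) 1 (-1) (-2) 2 H1. canonLC_in v P L h (-1) 1 (-1) (-2) 2 H2.
  canonLC_in v P L h 0 0 2 0 (-2) H1. canonLC_in v P L h 0 0 2 0 (-2) H2.
  canonLC_in v P L h 0 0 0 2 2 H1. canonLC_in v P L h 0 0 0 2 2 H2.
  canonLC_in v P L h (-1) 0 1 (-2) 0 H1. canonLC_in v P L h (-1) 0 1 (-2) 0 H2.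
  canonLC_in v P L h 0 1 0 0 0 H1. canonLC_in v P L h 0 1 0 0 0 H2.
  canonLC_in v P L h (-1) 0 1 0 (-2) H1. canonLC_in v P L h (-1) 0 1 0 (-2) H2.
  canonLC_in v P L h 0 1 0 2 2 H1. canonLC_in v P L h 0 1 0 2 2 H2.
  canonLC_in v P L h 0 1 0 2 0 H1. canonLC_in v P L h 0 1 0 2 0 H2.
  canonLC_in v P L h (-1) 0 (-1) (-2) 2 H1. canonLC_in v P L h (-1) 0 (-1) (-2) 2 H2.
  canonLC_in v P L h 0 1 (-2) 0 2 H1. canonLC_in v P L h 0 1 (-2) 0 2 H2.
  canonLC_in v P L h (-1) 0 (-1) 0 2 H1. canonLC_in v P L h (-1) 0 (-1) 0 2 H2.
  canonLC_in v P L h 0 1 (-2) (-2) 2 H1. canonLC_in v P L h 0 1 (-2) (-2) 2 H2.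
  canonLC_in v P L h (-1) 0 1 (-2) (-2) H1. canonLC_in v P L h (-1) 0 1 (-2) (-2) H2.
  canonLC_in v P L h 0 1 0 0 2 H1. canonLC_in v P L h 0 1 0 0 2 H2.
  canonLC_in v P L h (-1) 1 (-1) 0 2 H1. canonLC_in v P L h (-1) 1 (-1) 0 2 H2.
  canonLC_in v P L h 0 0 2 2 (-2) H1. canonLC_in v P L h 0 0 2 2 (-2) H2.
  canonLC_in v P L h 0 0 0 0 2 H1. canonLC_in v P L h 0 0 0 0 2 H2.
  canonLC_in v P L h 1 1 (-1) 2 2 H1. canonLC_in v P L h 1 1 (-1) 2 2 H2.
  canonLC_in v P L h 1 0 1 2 0 H1. canonLC_in v P L h 1 0 1 2 0 H2.
  canonLC_in v P L h 0 1 (-2) 0 4 H1. canonLC_in v P L h 0 1 (-2) 0 4 H2.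
  set (a1 := f (LC v P L eta h 1 1 (-1) 0 2)) in *.
  set (a2 := f (LC v P L eta h 0 0 0 2 0)) in *.
  set (a3 := f (LC v P L eta h (-1) 0 1 0 0)) in *.
  set (a4 := f (LC v P L eta h 0 1 0 (-2) 0)) in *.
  set (a5 := f (LC v P L eta h (-1) 1 (-1) (-2) 2)) in *.
  set (a6 := f (LC v P L eta h 0 0 2 0 (-2))) in *.
  set (a7 := f (LC v P L eta h 0 0 0 2 2)) in *.
  set (a8 := f (LC v P L eta h (-1) 0 1 (-2) 0)) in *.
  set (a9 := f (LC v P L eta h 0 1 0 0 0)) in *.
  set (a10 := f (LC v P L eta h (-1) 0 1 0 (-2))) in *.
  set (a11 := f (LC v P L eta h 0 1 0 2 2)) in *.
  set (a12 := f (LC v P L eta h 0 1 0 2 0)) in *.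
  set (a13 := f (LC v P L eta h (-1) 0 (-1) (-2) 2)) in *.
  set (a14 := f (LC v P L eta h 0 1 (-2) 0 2)) in *.
  set (a15 := f (LC v P L eta h (-1) 0 (-1) 0 2)) in *.
  set (a16 := f (LC v P L eta h 0 1 (-2) (-2) 2)) in *.
  set (a17 := f (LC v P L eta h (-1) 0 1 (-2) (-2))) in *.
  set (a18 := f (LC v P L eta h 0 1 0 0 2)) in *.
  set (a19 := f (LC v P L eta h (-1) 1 (-1) 0 2)) in *.
  set (a20 := f (LC v P L eta h 0 0 2 2 (-2))) in *.
  set (a21 := f (LC v P L eta h 0 0 0 0 2)) in *.
  set (a22 := f (LC v P L eta h 1 1 (-1) 2 2)) in *.
  set (a23 := f (LC v P L eta h 1 0 1 2 0)) in *.
  set (a24 := f (LC v P L eta h 0 1 (-2) 0 4)) in *.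
  assert (Z : a21 = C0). { assert (N2' : f te <> C0). { intro E. apply N2. unfold a2. rewrite <- E. f_equal. ceq2. }
    unfold a21. rewrite <- (f0 Hf N2'). f_equal. repeat match goal with x := _ |- _ => subst x end; unfold LC; apply CC_ext; cbn [re im Cadd Cmul Csub Copp CR C0 C1 Cnat CZ Cdiv Cinv]; rewrite ?INR_0; lra. }
  refine (lc3 _ _ _ _ _ _ (Cinv (Cmul (Cmul a3 a4) (Cmul a8 a9))) (Copp (Cinv (Cmul (Cmul a3 a12) (Cmul a8 a9))))
     a21 (Cdiv (Cmul (Cmul a19 a20) a22) (Cmul (Cmul a3 a12) (Cmul a8 a9))) _ H1 H2 Z).
  field. repeat split; assumption.
Qed.

End Local.

Lemma lin3 (Lh Rh p1 q1 p2 q2 p3 q3 : CC) :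
  Csub Lh Rh = Cadd (Cadd (Csub p1 q1) (Csub p2 q2)) (Csub p3 q3) ->
  p1 = q1 -> p2 = q2 -> p3 = q3 -> Lh = Rh.
Proof.
  intros H E1 E2 E3. subst. assert (Csub Lh Rh = C0) by (rewrite H; ring).
  transitivity (Cadd Rh (Csub Lh Rh)). ring. rewrite H0. ring.
Qed.

Section Sw.
Context (fc : fchoice) (tau eta lam Lam : CC) (i2 : nat).
Notation f := (ff fc tau).
Notation te := (Cmul (CR 2) eta).
Notation SN := (Sn fc tau eta lam Lam i2).

Lemma Sn_big K : forall n c v, (length K < c)%nat -> SN n c K v = C0.
Proof.
  induction K as [|b K IH]; intros n c v Hc; cbn [Sn length] in *.
  - destruct c. lia. reflexivity.
  - destruct c as [|c]. lia.
    destruct (hstep false b n); destruct (hstep true b n); rewrite ?IH by lia; ring.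
Qed.

Lemma nzP N (HP : forall z : Z, (Z.abs z <= Z.of_nat N)%Z -> f (Cadd lam (Cmul te (CZ z))) <> C0)
  c2 k v h ce (d : Z) : ce = 2 * IZR d ->
  (Z.abs (2 * Z.of_nat c2 - Z.of_nat k + d) <= Z.of_nat N)%Z ->
  f (LC v (phiF eta lam c2 k) (Cmul eta Lam) eta h 0 1 0 ce 0) <> C0.
Proof.
  intros Hce Hz E. apply (HP _ Hz). rewrite <- E. f_equal. subst ce.
  unfold LC, phiF, CZ. apply CC_ext; cbn [re im Cadd Cmul Csub Copp CR C0 C1 Cnat CZ].
  all: rewrite ?plus_IZR, ?minus_IZR, ?mult_IZR, <- ?INR_IZR_INZ; lra.
Qed.

Lemma nzV v j (HV : f (Csub (Cmul eta Lam) (Cadd v (Cmul te (Cnat j)))) <> C0) P h ce :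
  ce = -2 * INR j -> f (LC v P (Cmul eta Lam) eta h (-1) 0 1 ce 0) <> C0.
Proof.
  intros Hce E. apply HV. rewrite <- E. f_equal. subst ce.
  unfold LC. apply CC_ext; cbn [re im Cadd Cmul Csub Copp CR C0 C1 Cnat CZ]; lra.
Qed.

Lemma nz2 (N2 : f te <> C0) v P h : f (LC v P (Cmul eta Lam) eta h 0 0 0 2 0) <> C0.
Proof.
  intros E. apply N2. rewrite <- E. f_equal.
  unfold LC. apply CC_ext; cbn [re im Cadd Cmul Csub Copp CR C0 C1 Cnat CZ]; lra.
Qed.


Ltac nzs K HV HP N2 := first
 [ apply nz2; exact N2
 | apply nzV with (j := 0%nat); [apply HV; lia | simpl; lra]
 | apply nzV with (j := 1%nat); [apply HV; lia | simpl; lra]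
 | apply nzP with (N := S (S (length K))) (d := (-1)%Z); [exact HP | simpl; lra | lia]
 | apply nzP with (N := S (S (length K))) (d := 0%Z); [exact HP | simpl; lra | lia]
 | apply nzP with (N := S (S (length K))) (d := 1%Z); [exact HP | simpl; lra | lia] ].

Section G.
Context (Hf : Ftt f) (N2 : f te <> C0) (K : list bool) (v : CC)
  (HV : forall j, (j < 2)%nat -> f (Csub (Cmul eta Lam) (Cadd v (Cmul te (Cnat j)))) <> C0)
  (HP : forall z : Z, (Z.abs z <= Z.of_nat (S (S (length K))))%Z -> f (Cadd lam (Cmul te (CZ z))) <> C0).

Lemma G0 m c2 : let k := length K in
  Cmul (Cmul (W1 fc tau eta (S m) false (S m) false v (phiF eta lam c2 (S k)) Lam)
       (W1 fc tau eta (S m) false m true (Cadd v te) (phiF eta lam c2 k) Lam)) (SN m c2 K (Cadd (Cadd v te) te)) =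
  Cmul (Cmul (W1 fc tau eta (S m) false m true v (phiF eta lam c2 (S k)) Lam)
       (W1 fc tau eta m false m false (Cadd v te) (phiF eta lam c2 k) Lam)) (SN m c2 K (Cadd (Cadd v te) te)).
Proof.
  intro k. destruct (le_lt_dec c2 k) as [Hle|Hgt].
  - f_equal. apply L0; auto. all: nzs K HV HP N2.
  - rewrite Sn_big by (unfold k in Hgt; lia). ring.
Qed.

Lemma G1S m c2 : let k := length K in
  Cmul (Cadd (Cmul (W1 fc tau eta (S m) true (S (S m)) false v (phiF eta lam c2 (S k)) Lam)
            (W1 fc tau eta (S (S m)) false (S m) true (Cadd v te) (phiF eta lam c2 k) Lam))
      (Cmul (W1 fc tau eta (S m) false (S m) false v (phiF eta lam (S c2) (S k)) Lam)
            (W1 fc tau eta (S m) true (S m) true (Cadd v te) (phiF eta lam c2 k) Lam))) (SN (S m) c2 K (Cadd (Cadd v te) te)) =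
  Cmul (Cadd (Cmul (W1 fc tau eta (S m) true (S m) true v (phiF eta lam c2 (S k)) Lam)
            (W1 fc tau eta (S m) false (S m) false (Cadd v te) (phiF eta lam c2 k) Lam))
      (Cmul (W1 fc tau eta (S m) false m true v (phiF eta lam (S c2) (S k)) Lam)
            (W1 fc tau eta m true (S m) false (Cadd v te) (phiF eta lam c2 k) Lam))) (SN (S m) c2 K (Cadd (Cadd v te) te)).
Proof.
  intro k. destruct (le_lt_dec c2 k) as [Hle|Hgt].
  - f_equal. apply L1S; auto; nzs K HV HP N2.
  - rewrite Sn_big by (unfold k in Hgt; lia). ring.
Qed.

Lemma G1_0 c2 : let k := length K in
  Cmul (Cadd (Cmul (W1 fc tau eta 0 true 1 false v (phiF eta lam c2 (S k)) Lam)
            (W1 fc tau eta 1 false 0 true (Cadd v te) (phiF eta lam c2 k) Lam))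
       (Cmul (W1 fc tau eta 0 false 0 false v (phiF eta lam (S c2) (S k)) Lam)
            (W1 fc tau eta 0 true 0 true (Cadd v te) (phiF eta lam c2 k) Lam))) (SN 0 c2 K (Cadd (Cadd v te) te)) =
  Cmul (Cmul (W1 fc tau eta 0 true 0 true v (phiF eta lam c2 (S k)) Lam)
       (W1 fc tau eta 0 false 0 false (Cadd v te) (phiF eta lam c2 k) Lam)) (SN 0 c2 K (Cadd (Cadd v te) te)).
Proof.
  intro k. destruct (le_lt_dec c2 k) as [Hle|Hgt].
  - f_equal. apply L1_0; auto; nzs K HV HP N2.
  - rewrite Sn_big by (unfold k in Hgt; lia). ring.
Qed.

Lemma G2 m c2 : let k := length K in
  Cmul (Cmul (W1 fc tau eta m true (S m) false v (phiF eta lam (S c2) (S k)) Lam)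
       (W1 fc tau eta (S m) true (S m) true (Cadd v te) (phiF eta lam c2 k) Lam)) (SN (S m) c2 K (Cadd (Cadd v te) te)) =
  Cmul (Cmul (W1 fc tau eta m true m true v (phiF eta lam (S c2) (S k)) Lam)
       (W1 fc tau eta m true (S m) false (Cadd v te) (phiF eta lam c2 k) Lam)) (SN (S m) c2 K (Cadd (Cadd v te) te)).
Proof.
  intro k. destruct (le_lt_dec c2 k) as [Hle|Hgt].
  - f_equal. apply L2; auto; nzs K HV HP N2.
  - rewrite Sn_big by (unfold k in Hgt; lia). ring.
Qed.

Lemma Sn_swap n c : SN n c (false :: true :: K) v = SN n c (true :: false :: K) v.
Proof.
  cbn [Sn hstep length]. destruct c as [|[|d]]; destruct n as [|m]; cbn [hstep].
  - ring.
  - refine (lin3 _ _ _ _ _ _ _ _ _ (G0 m 0) (eq_refl C0) (eq_refl C0)). ring.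
  - refine (lin3 _ _ _ _ _ _ _ _ _ (G1_0 0) (eq_refl C0) (eq_refl C0)). ring.
  - refine (lin3 _ _ _ _ _ _ _ _ _ (G0 m 1) (G1S m 0) (eq_refl C0)). ring.
  - refine (lin3 _ _ _ _ _ _ _ _ _ (G1_0 (S d)) (G2 0 d) (eq_refl C0)). ring.
  - refine (lin3 _ _ _ _ _ _ _ _ _ (G0 m (S (S d))) (G1S m (S d)) (G2 (S m) d)). ring.
Qed.
End G.
End Sw.

Section P.
Context (fc : fchoice) (tau eta lam Lam : CC) (i2 : nat).
Notation f := (ff fc tau).
Notation te := (Cmul (CR 2) eta).
Notation SN := (Sn fc tau eta lam Lam i2).
Context (Hf : Ftt f) (N2 : f te <> C0).

Definition HypV v N := forall j, (j < N)%nat -> f (Csub (Cmul eta Lam) (Cadd v (Cmul te (Cnat j)))) <> C0.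
Definition HypP N := forall z : Z, (Z.abs z <= Z.of_nat N)%Z -> f (Cadd lam (Cmul te (CZ z))) <> C0.

Lemma HypV_S v N : HypV v (S N) -> HypV (Cadd v te) N.
Proof.
  intros H j Hj E. apply (H (S j)). lia. rewrite <- E. f_equal. ceq.
Qed.

Lemma HypP_mono N M : (N <= M)%nat -> HypP M -> HypP N.
Proof. intros HNM H z Hz. apply H. lia. Qed.

Definition Equiv v K1 K2 := forall n c, SN n c K1 v = SN n c K2 v.

Lemma Sn_cong b K1 K2 v : length K1 = length K2 -> Equiv (Cadd v te) K1 K2 -> Equiv v (b :: K1) (b :: K2).
Proof.
  intros HL H n c. cbn [Sn length]. rewrite HL.
  destruct (hstep false b n), (hstep true b n); destruct c; rewrite ?H; reflexivity.
Qed.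

Lemma move_true y x : forall v, HypV v (S (x + y)) -> HypP (S (x + y)) ->
  Equiv v (true :: repeat false x ++ repeat true y) (repeat false x ++ true :: repeat true y).
Proof.
  induction x as [|x IH]; intros v HV HP.
  - intros n c; reflexivity.
  - intros n c. simpl repeat. rewrite <- app_comm_cons.
    transitivity (SN n c (false :: true :: repeat false x ++ repeat true y) v).
    + symmetry. apply Sn_swap; auto.
      * intros j Hj. apply HV. lia.
      * rewrite length_app, !repeat_length. intros z Hz. apply HP. replace (S (S x + y)) with (S (S (x + y))) in Hz by lia. exact Hz.
    + apply Sn_cong.
      * simpl. rewrite !length_app. simpl. rewrite !repeat_length. lia.
      * apply IH. apply HypV_S. replace (S (S x + y)) with (S (S (x + y))) in HV by lia. exact HV.
        apply (HypP_mono _ (S (S x + y))). lia. exact HP.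
Qed.

Definition canon (K : list bool) := repeat false (length K - ones K) ++ repeat true (ones K).

Lemma ones_le K : (ones K <= length K)%nat.
Proof. induction K as [|[] K IH]; unfold ones in *; simpl; lia. Qed.

Lemma Sn_canon K : forall v, HypV v (length K) -> HypP (length K) -> Equiv v K (canon K).
Proof.
  induction K as [|b K IH]; intros v HV HP.
  - intros n c; reflexivity.
  - intros n c. transitivity (SN n c (b :: canon K) v).
    + apply Sn_cong. unfold canon. rewrite length_app, !repeat_length. pose proof (ones_le K). lia.
      apply IH. apply HypV_S; exact HV. apply (HypP_mono _ (length (b :: K))). simpl; lia. exact HP.
    + pose proof (ones_le K) as Hle. destruct b.
      * unfold canon. simpl length. replace (S (length K) - ones (true :: K))%nat with (length K - ones K)%nat
          by (unfold ones in *; simpl; lia).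
        change (ones (true :: K)) with (S (ones K)).
        apply move_true.
        -- replace (S (length K - ones K + ones K)) with (length (true :: K)) by (simpl; lia). exact HV.
        -- replace (S (length K - ones K + ones K)) with (length (true :: K)) by (simpl; lia). exact HP.
      * unfold canon. simpl length. change (ones (false :: K)) with (ones K).
        replace (S (length K) - ones K)%nat with (S (length K - ones K)) by lia. reflexivity.
Qed.

Lemma Sn_perm K K' v : length K = length K' -> ones K = ones K' ->
  HypV v (length K) -> HypP (length K) -> forall n c, SN n c K v = SN n c K' v.
Proof.
  intros HL HO HV HP n c. rewrite (Sn_canon K v HV HP).
  rewrite HL in HV, HP. rewrite (Sn_canon K' v HV HP). unfold canon. rewrite HL, HO. reflexivity.
Qed.
End P.

Lemma WJsum_Sn fc tau eta i1 j1 i2 K v lam Lam :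
  WJsum fc tau eta i1 j1 i2 K v lam Lam = Sn fc tau eta lam Lam i2 i1 j1 K v.
Proof.
  unfold WJsum.
  rewrite (map_ext_in _ (fun J1 => colW_aux fc tau eta Lam i2 (Z.of_nat i1) J1 K (phis eta lam J1) v)).
  - rewrite WJ_Sr, Sr_Sn. reflexivity.
  - intros J1 HJ. apply filter_In in HJ. destruct HJ as [HJ _]. apply blists_len in HJ.
    unfold WJ. rewrite HJ, Nat.eqb_refl. reflexivity.
Qed.

Lemma main_generic (fc : fchoice) (eta tau : CC) (Hf : Ftt (ff fc tau))
  (J : nat) (i1 j1 i2 j2 : nat) (K K' : list bool)
  (HK : length K = J) (HK' : length K' = J)
  (HjK : ones K = j2) (HjK' : ones K' = j2)
  (v lam Lam : CC)
  (H2eta : ff fc tau (Cmul (CR 2) eta) <> C0)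
  (Hden1 : forall k : nat, (k < J)%nat ->
     ff fc tau (Csub (Cmul eta Lam) (Cadd v (Cmul (Cmul (CR 2) eta) (Cnat k)))) <> C0)
  (Hden2 : forall m : Z, (Z.abs m <= Z.of_nat J)%Z ->
     ff fc tau (Cadd lam (Cmul (Cmul (CR 2) eta) (CZ m))) <> C0) :
  WJsum fc tau eta i1 j1 i2 K v lam Lam = WJsum fc tau eta i1 j1 i2 K' v lam Lam.
Proof.
  rewrite !WJsum_Sn. apply Sn_perm; auto; try congruence.
  - rewrite HK. exact Hden1.
  - rewrite HK. exact Hden2.
Qed.

Definition nrm (z : CC) : R := Rabs (re z) + Rabs (im z).

Lemma nrm_ge0 z : 0 <= nrm z.
Proof. unfold nrm. pose proof (Rabs_pos (re z)); pose proof (Rabs_pos (im z)); lra. Qed.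

Lemma nrm_add a b : nrm (Cadd a b) <= nrm a + nrm b.
Proof.
  unfold nrm; simpl. pose proof (Rabs_triang (re a) (re b)); pose proof (Rabs_triang (im a) (im b)); lra.
Qed.

Lemma nrm_opp a : nrm (Copp a) = nrm a.
Proof. unfold nrm; simpl. rewrite !Rabs_Ropp. reflexivity. Qed.

Lemma nrm_sub a b : nrm (Csub a b) <= nrm a + nrm b.
Proof. unfold Csub. rewrite <- (nrm_opp b). apply nrm_add. Qed.

Lemma nrm_mul a b : nrm (Cmul a b) <= nrm a * nrm b.
Proof.
  unfold nrm; simpl.
  pose proof (Rabs_triang (re a * re b) (- (im a * im b))).
  pose proof (Rabs_triang (re a * im b) (im a * re b)).
  rewrite Rabs_Ropp in H. rewrite !Rabs_mult in H, H0.
  unfold Rminus. pose proof (Rabs_pos (re a)); pose proof (Rabs_pos (im a));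
  pose proof (Rabs_pos (re b)); pose proof (Rabs_pos (im b)). nra.
Qed.

Lemma Rabs_re_le z : Rabs (re z) <= nrm z.
Proof. unfold nrm. pose proof (Rabs_pos (im z)). lra. Qed.
Lemma Rabs_im_le z : Rabs (im z) <= nrm z.
Proof. unfold nrm. pose proof (Rabs_pos (re z)). lra. Qed.

Definition Ccv (u : nat -> CC) (l : CC) : Prop :=
  Un_cv (fun n => re (u n)) (re l) /\ Un_cv (fun n => im (u n)) (im l).

Lemma Ccv_add u v a b : Ccv u a -> Ccv v b -> Ccv (fun n => Cadd (u n) (v n)) (Cadd a b).
Proof. intros [H1 H2] [H3 H4]; split; simpl; apply CV_plus; auto. Qed.

Lemma Ccv_opp u a : Ccv u a -> Ccv (fun n => Copp (u n)) (Copp a).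
Proof. intros [H1 H2]; split; simpl; apply CV_opp; auto. Qed.

Lemma Ccv_sub u v a b : Ccv u a -> Ccv v b -> Ccv (fun n => Csub (u n) (v n)) (Csub a b).
Proof. intros H1 H2. apply Ccv_add; auto. apply Ccv_opp; auto. Qed.

Lemma Ccv_mul u v a b : Ccv u a -> Ccv v b -> Ccv (fun n => Cmul (u n) (v n)) (Cmul a b).
Proof.
  intros [H1 H2] [H3 H4]; split; simpl.
  - apply CV_minus; apply CV_mult; auto.
  - apply CV_plus; apply CV_mult; auto.
Qed.

Lemma Ccv_unique u a b : Ccv u a -> Ccv u b -> a = b.
Proof.
  intros [H1 H2] [H3 H4]. apply CC_ext; eapply UL_sequence; eauto.
Qed.

Lemma Ccv_ext u v a : (forall n, u n = v n) -> Ccv u a -> Ccv v a.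
Proof.
  intros E [H1 H2]; split; intros eps Heps; [destruct (H1 eps Heps) as [N HN] | destruct (H2 eps Heps) as [N HN]];
  exists N; intros n Hn; rewrite <- E; auto.
Qed.

Lemma Ccv_const a : Ccv (fun _ => a) a.
Proof. split; intros eps Heps; exists 0%nat; intros; unfold R_dist; rewrite Rminus_diag, Rabs_R0; auto. Qed.

Lemma Ccv_close u v a (e : nat -> R) : Un_cv e 0 -> (forall n, nrm (Csub (u n) (v n)) <= e n) -> Ccv v a -> Ccv u a.
Proof.
  intros He Hb [H1 H2]; split; intros eps Heps.
  - destruct (He (eps/2)) as [N1 HN1]. lra. destruct (H1 (eps/2)) as [N2 HN2]. lra.
    exists (Nat.max N1 N2). intros n Hn. specialize (HN1 n ltac:(lia)). specialize (HN2 n ltac:(lia)).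
    unfold R_dist in *. specialize (Hb n). pose proof (Rabs_re_le (Csub (u n) (v n))).
    simpl in H. rewrite Rminus_0_r in HN1.
    replace (re (u n) - re a) with ((re (u n) + - re (v n)) + (re (v n) - re a)) by ring.
    pose proof (Rabs_triang (re (u n) + - re (v n)) (re (v n) - re a)).
    pose proof (Rle_abs (e n)). lra.
  - destruct (He (eps/2)) as [N1 HN1]. lra. destruct (H2 (eps/2)) as [N2 HN2]. lra.
    exists (Nat.max N1 N2). intros n Hn. specialize (HN1 n ltac:(lia)). specialize (HN2 n ltac:(lia)).
    unfold R_dist in *. specialize (Hb n). pose proof (Rabs_im_le (Csub (u n) (v n))).
    simpl in H. rewrite Rminus_0_r in HN1.
    replace (im (u n) - im a) with ((im (u n) + - im (v n)) + (im (v n) - im a)) by ring.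
    pose proof (Rabs_triang (im (u n) + - im (v n)) (im (v n) - im a)).
    pose proof (Rle_abs (e n)). lra.
Qed.

Lemma Cexp_add a b : Cexp (Cadd a b) = Cmul (Cexp a) (Cexp b).
Proof.
  apply CC_ext; simpl; rewrite exp_plus, ?cos_plus, ?sin_plus; ring.
Qed.

Lemma nrm_Cexp a : nrm (Cexp a) <= 2 * exp (re a).
Proof.
  unfold nrm, Cexp; simpl. rewrite !Rabs_mult, (Rabs_right (exp (re a))) by (left; apply exp_pos).
  pose proof (exp_pos (re a)). pose proof (COS_bound (im a)). pose proof (SIN_bound (im a)).
  assert (Rabs (cos (im a)) <= 1) by (apply Rabs_le; lra).
  assert (Rabs (sin (im a)) <= 1) by (apply Rabs_le; lra). nra.
Qed.

Lemma sin_kPI k : sin (IZR k * PI) = 0.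
Proof. apply sin_eq_0_1. exists k; reflexivity. Qed.

Lemma cos_2kPI k : cos (2 * (IZR k * PI)) = 1.
Proof. rewrite cos_2a_sin, sin_kPI. ring. Qed.

Lemma Cexp_2kpi (k : Z) : Cexp (mkC 0 (2 * (IZR k * PI))) = C1.
Proof.
  apply CC_ext; simpl; rewrite exp_0. rewrite cos_2kPI; ring.
  rewrite sin_2a, sin_kPI. ring.
Qed.

Lemma Cexp_oddpi (k : Z) : Cexp (mkC 0 (2 * (IZR k * PI) + PI)) = Copp C1.
Proof.
  apply CC_ext; simpl; rewrite exp_0.
  - rewrite cos_plus, cos_2kPI, cos_PI, sin_PI. ring.
  - rewrite sin_plus, sin_2a, sin_kPI, sin_PI. ring.
Qed.

Fixpoint zr (M : nat) : list Z :=
  match M with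
  | O => [0%Z]
  | S M' => (- Z.of_nat M)%Z :: zr M' ++ [Z.of_nat M]
  end.

Lemma Csum_app' (l1 l2 : list CC) : Csum (l1 ++ l2) = Cadd (Csum l1) (Csum l2).
Proof. induction l1; simpl. ceq. rewrite IHl1. ceq. Qed.

Lemma Csum_cons a l : Csum (a :: l) = Cadd a (Csum l).
Proof. reflexivity. Qed.

Section Th.
Context (tau : CC).
Notation t := (theta_term tau).

Lemma theta_aux_shift z N n :
  theta_aux tau z (S N) (S n) = Cadd (t z (- Z.of_nat (S N))%Z) (theta_aux tau z N n).
Proof.
  induction n as [|n IH].
  - simpl. replace (Z.of_nat 0 - Z.of_nat (S N))%Z with (- Z.of_nat (S N))%Z by lia. ceq.
  - change (theta_aux tau z (S N) (S (S n))) with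
      (Cadd (theta_aux tau z (S N) (S n)) (t z (Z.of_nat (S n) - Z.of_nat (S N))%Z)).
    rewrite IH. simpl theta_aux at 2.
    replace (Z.of_nat (S n) - Z.of_nat (S N))%Z with (Z.of_nat n - Z.of_nat N)%Z by lia. ceq.
Qed.

Lemma theta_partial_zr z N : theta_partial tau z N = Csum (map (t z) (zr N)).
Proof.
  induction N as [|N IH].
  - unfold theta_partial. simpl. ceq.
  - unfold theta_partial in *.
    replace (2 * S N + 1)%nat with (S (S (2 * N + 1))) by lia.
    rewrite theta_aux_shift. change (theta_aux tau z N (S (2 * N + 1))) with
      (Cadd (theta_aux tau z N (2 * N + 1)) (t z (Z.of_nat (2 * N + 1) - Z.of_nat N)%Z)).
    rewrite IH. cbn [zr]. rewrite map_cons, Csum_cons, map_app, Csum_app'. cbn [map]. rewrite Csum_cons.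
    replace (Z.of_nat (2 * N + 1) - Z.of_nat N)%Z with (Z.of_nat (S N)) by lia. change (Csum []) with C0. ring.
Qed.
End Th.

Lemma exp_opp_pow n : exp (- INR n) = exp (-1) ^ n.
Proof.
  induction n as [|n IH]. simpl. rewrite Ropp_0, exp_0. reflexivity.
  rewrite S_INR, <- tech_pow_Rmult, <- IH, <- exp_plus. f_equal. ring.
Qed.

Lemma INR_abs_nat j : INR (Z.abs_nat j) = Rabs (IZR j).
Proof. rewrite INR_IZR_INZ, <- abs_IZR. f_equal. lia. Qed.

Definition rr := exp (-1).
Lemma rr_pos : 0 < rr. Proof. apply exp_pos. Qed.
Lemma rr_lt1 : rr < 1.
Proof. unfold rr. rewrite <- exp_0. apply exp_increasing. lra. Qed.

Lemma gauss_bound b c x : 0 < b -> - PI * b * x^2 + c * x + Rabs x <= (Rabs c + 1)^2 / (4 * PI * b).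
Proof.
  intros Hb. pose proof PI_RGT_0 as HPI.
  assert (H1 : c * x <= Rabs c * Rabs x) by (rewrite <- Rabs_mult; apply Rle_abs).
  assert (H2 : x^2 = Rabs x ^ 2) by (rewrite <- !Rsqr_pow2; apply Rsqr_abs).
  set (a := Rabs x) in *. set (A := Rabs c + 1).
  assert (0 < 4 * PI * b) by nra.
  apply Rle_trans with (- PI * b * a^2 + A * a). unfold A; rewrite H2; lra.
  assert (E : A^2 / (4 * PI * b) - (- PI * b * a^2 + A * a) = (2 * PI * b * a - A)^2 / (4 * PI * b)) by (field; lra).
  assert (0 <= (2 * PI * b * a - A)^2 / (4 * PI * b)). { unfold Rdiv. apply Rmult_le_pos. apply pow2_ge_0. left. apply Rinv_0_lt_compat. lra. }
  lra.
Qed.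

Lemma exp_mono x y : x <= y -> exp x <= exp y.
Proof. intros [H|H]. left; apply exp_increasing; auto. right; subst; auto. Qed.

Section TB.
Context (tau : CC) (Htau : 0 < im tau).
Notation t := (theta_term tau).

Definition Ct (z : CC) := 2 * exp ((2 * PI * Rabs (im z) + 1)^2 / (4 * PI * im tau) + /2).

Lemma t_bound z j : nrm (t z j) <= Ct z * rr ^ (Z.abs_nat j).
Proof.
  unfold theta_term. eapply Rle_trans. apply nrm_Cexp.
  unfold Ct, rr. rewrite <- exp_opp_pow, INR_abs_nat. rewrite Rmult_assoc, <- exp_plus.
  apply Rmult_le_compat_l. lra. apply exp_mono. simpl re.
  set (h := IZR j + / 2).
  pose proof (gauss_bound (im tau) (- (2 * PI * im z)) h Htau) as G.
  assert (Ec : Rabs (- (2 * PI * im z)) = 2 * PI * Rabs (im z)).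
  { rewrite Rabs_Ropp, !Rabs_mult, (Rabs_right 2) by lra. rewrite (Rabs_right PI). reflexivity.
    left; apply PI_RGT_0. }
  rewrite Ec in G.
  assert (Hj : Rabs (IZR j) <= Rabs h + /2).
  { replace (IZR j) with (h + - / 2) by (unfold h; ring).
    pose proof (Rabs_triang h (- / 2)). rewrite Rabs_Ropp, (Rabs_right (/2)) in H by lra. lra. }
  replace (h * h) with (h ^ 2) by ring. nra.
Qed.
End TB.

Definition Rsum (l : list R) : R := fold_right Rplus 0 l.

Lemma Rsum_app l1 l2 : Rsum (l1 ++ l2) = Rsum l1 + Rsum l2.
Proof. induction l1; simpl. ring. rewrite IHl1. ring. Qed.

Lemma Rsum_le {A} (u v : A -> R) l : (forall x, In x l -> u x <= v x) -> Rsum (map u l) <= Rsum (map v l).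
Proof. induction l; simpl; intros H. lra. pose proof (H a (or_introl eq_refl)). pose proof (IHl (fun x Hx => H x (or_intror Hx))). lra. Qed.

Lemma Rsum_ge0 {A} (u : A -> R) l : (forall x, u x >= 0) -> 0 <= Rsum (map u l).
Proof. induction l; simpl; intros H. lra. pose proof (H a). pose proof (IHl H). lra. Qed.

Lemma Rsum_plus {A} (u v : A -> R) l : Rsum (map (fun x => u x + v x) l) = Rsum (map u l) + Rsum (map v l).
Proof. induction l; simpl. ring. rewrite IHl. ring. Qed.

Lemma Rsum_scal {A} c (u : A -> R) l : Rsum (map (fun x => c * u x) l) = c * Rsum (map u l).
Proof. induction l; simpl. ring. rewrite IHl. ring. Qed.

Lemma nrm_Csum {A} (g : A -> CC) l : nrm (Csum (map g l)) <= Rsum (map (fun x => nrm (g x)) l).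
Proof.
  induction l; simpl. unfold nrm; simpl; rewrite Rabs_R0; lra.
  eapply Rle_trans. apply nrm_add. lra.
Qed.

Lemma Csum_map_add {A} (g h : A -> CC) l : Csum (map (fun x => Cadd (g x) (h x)) l) = Cadd (Csum (map g l)) (Csum (map h l)).
Proof. induction l; simpl. ceq. rewrite IHl. ring. Qed.
Lemma Csum_map_opp {A} (g : A -> CC) l : Csum (map (fun x => Copp (g x)) l) = Copp (Csum (map g l)).
Proof. induction l; simpl. ceq. rewrite IHl. ring. Qed.
Lemma Csum_map_scal {A} c (g : A -> CC) l : Csum (map (fun x => Cmul c (g x)) l) = Cmul c (Csum (map g l)).
Proof. induction l; simpl. ceq. rewrite IHl. ring. Qed.
Lemma Csum_ext {A} (g h : A -> CC) l : (forall x, In x l -> g x = h x) -> Csum (map g l) = Csum (map h l).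
Proof. intros H. f_equal. apply map_ext_in. auto. Qed.

Lemma Csum_perm {A} (g : A -> CC) l1 l2 : Permutation l1 l2 -> Csum (map g l1) = Csum (map g l2).
Proof.
  induction 1; simpl; auto.
  - rewrite IHPermutation. reflexivity.
  - ring.
  - congruence.
Qed.

Lemma Csum_prod {A B} (u : A -> CC) (v : B -> CC) la lb :
  Csum (map (fun p => Cmul (u (fst p)) (v (snd p))) (list_prod la lb)) = Cmul (Csum (map u la)) (Csum (map v lb)).
Proof.
  induction la as [|a la IH]; simpl. ceq.
  rewrite map_app, Csum_app', IH, map_map. simpl. rewrite Csum_map_scal. ring.
Qed.

Lemma Rsum_prod {A B} (u : A -> R) (v : B -> R) la lb :
  Rsum (map (fun p => u (fst p) * v (snd p)) (list_prod la lb)) = Rsum (map u la) * Rsum (map v lb).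
Proof.
  induction la as [|a la IH]; simpl. ring.
  rewrite map_app, Rsum_app, IH, map_map. simpl. rewrite Rsum_scal. ring.
Qed.

Lemma NoDup_list_prod' {A B} (la : list A) (lb : list B) : NoDup la -> NoDup lb -> NoDup (list_prod la lb).
Proof.
  intros Ha Hb. induction Ha as [|a la Hn Ha IH]; simpl. constructor.
  apply NoDup_app; auto.
  - clear IH Hn. induction Hb; simpl; constructor; auto.
    intro Hin. apply in_map_iff in Hin. destruct Hin as [y [E Hy]]. inversion E; subst. contradiction.
  - intros p Hp1 Hp2. apply in_map_iff in Hp1. destruct Hp1 as [y [E _]]. subst.
    apply in_prod_iff in Hp2. destruct Hp2. contradiction.
Qed.

Lemma NoDup_map_inj {A B} (f : A -> B) l : (forall x y, f x = f y -> x = y) -> NoDup l -> NoDup (map f l).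
Proof.
  intros Hi Hl. induction Hl; simpl; constructor; auto.
  intro Hin. apply in_map_iff in Hin. destruct Hin as [y [E Hy]]. apply Hi in E. subst. contradiction.
Qed.

Definition pdec (p q : Z * Z) : {p = q} + {p <> q}.
Proof. decide equality; apply Z.eq_dec. Defined.

Definition chi (L : list (Z * Z)) (p : Z * Z) : CC := if in_dec pdec p L then C1 else C0.

Lemma Csum_indicator (G : Z * Z -> CC) S : forall L, NoDup L -> NoDup S -> incl L S ->
  Csum (map G L) = Csum (map (fun p => Cmul (chi L p) (G p)) S).
Proof.
  induction S as [|s S IH]; intros L HL HS Hinc.
  - destruct L as [|x L]. reflexivity. exfalso. apply (Hinc x). left; auto.
  - inversion HS; subst. simpl. unfold chi at 1. destruct (in_dec pdec s L) as [Hs|Hs].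
    + destruct (in_split _ _ Hs) as [l1 [l2 El]]. subst L.
      rewrite (Csum_perm G _ (s :: l1 ++ l2)) by (symmetry; apply Permutation_middle).
      simpl. assert (HND : NoDup (s :: l1 ++ l2)) by (eapply Permutation_NoDup; [symmetry; apply Permutation_middle | auto]).
      inversion HND; subst. rewrite (IH (l1 ++ l2)); auto.
      * f_equal. ring. apply Csum_ext. intros p Hp. unfold chi.
        destruct (in_dec pdec p (l1 ++ l2)), (in_dec pdec p (l1 ++ s :: l2)); auto.
        -- exfalso. apply n. apply in_app_or in i. apply in_or_app. destruct i; auto. right; right; auto.
        -- exfalso. apply n. apply in_app_or in i. apply in_or_app. destruct i as [i|[i|i]]; auto. subst. contradiction.
      * intros p Hp. assert (In p (s :: S)). apply Hinc. apply in_app_or in Hp. apply in_or_app. destruct Hp; auto. right; right; auto.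
        destruct H; auto. subst. contradiction.
    + rewrite (IH L); auto.
      * f_equal. ring.
      * intros p Hp. destruct (Hinc p Hp); auto. subst. contradiction.
Qed.

Lemma In_zr K j : In j (zr K) <-> (Z.abs j <= Z.of_nat K)%Z.
Proof.
  induction K as [|K IH]; simpl.
  - split. intros [<-|[]]. simpl; lia. intro; left; lia.
  - rewrite in_app_iff, IH. simpl. split.
    + intros [E|[H|[E|[]]]]; lia.
    + intro H. destruct (Z.eq_dec j (- Z.pos (Pos.of_succ_nat K))). left; lia.
      destruct (Z.eq_dec j (Z.pos (Pos.of_succ_nat K))). right; right; left; lia. right; left; lia.
Qed.

Lemma NoDup_zr K : NoDup (zr K).
Proof.
  induction K as [|K IH]; simpl.
  - constructor. intros []. constructor.
  - constructor.
    + rewrite in_app_iff, In_zr. simpl. lia.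
    + apply NoDup_app; auto. constructor. intros []. constructor.
      intros a Ha [E|[]]. subst. apply In_zr in Ha. lia.
Qed.

Lemma Rsum_zr_S (u : Z -> R) K :
  Rsum (map u (zr (S K))) = u (- Z.of_nat (S K))%Z + Rsum (map u (zr K)) + u (Z.of_nat (S K)).
Proof. cbn [zr]. rewrite map_cons, map_app. simpl. rewrite Rsum_app. simpl. ring. Qed.

Definition tailf (M : nat) (j : Z) : R := if (Z.abs j <=? Z.of_nat M)%Z then 0 else rr ^ (Z.abs_nat j).

Lemma zr_tail M K :
  Rsum (map (tailf M) (zr K)) + (if (K <=? M)%nat then 2 * rr ^ (S M) / (1 - rr) else 2 * rr ^ (S K) / (1 - rr))
  <= 2 * rr ^ (S M) / (1 - rr).
Proof.
  pose proof rr_lt1. pose proof rr_pos.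
  induction K as [|K IH].
  - simpl. unfold tailf. simpl. replace (0 <=? Z.of_nat M)%Z with true by (symmetry; apply Z.leb_le; lia). lra.
  - rewrite Rsum_zr_S. unfold tailf at 1 3.
    destruct (Nat.leb_spec (S K) M) as [HKM|HKM].
    + assert (Kle : (K <=? M)%nat = true) by (apply Nat.leb_le; lia). rewrite Kle in IH.
      replace (Z.abs (- Z.of_nat (S K)) <=? Z.of_nat M)%Z with true by (symmetry; apply Z.leb_le; lia).
      replace (Z.abs (Z.of_nat (S K)) <=? Z.of_nat M)%Z with true by (symmetry; apply Z.leb_le; lia). lra.
    + replace (Z.abs (- Z.of_nat (S K)) <=? Z.of_nat M)%Z with false by (symmetry; apply Z.leb_gt; lia).
      replace (Z.abs (Z.of_nat (S K)) <=? Z.of_nat M)%Z with false by (symmetry; apply Z.leb_gt; lia).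
      replace (Z.abs_nat (- Z.of_nat (S K))) with (S K) by lia.
      replace (Z.abs_nat (Z.of_nat (S K))) with (S K) by lia.
      destruct (Nat.leb_spec K M) as [HK|HK].
      * assert (K = M) by lia. subst. simpl (rr ^ S M) in *.
        assert (E : 2 * (rr * rr ^ M) / (1 - rr) = 2 * (rr * rr ^ M) + 2 * (rr * (rr * rr ^ M)) / (1 - rr)) by (field; lra).
        simpl. lra.
      * assert (E : 2 * rr ^ S K / (1 - rr) = 2 * rr ^ S K + 2 * rr ^ S (S K) / (1 - rr)) by (simpl; field; lra).
        lra.
Qed.

Lemma zr_tail' M K : Rsum (map (tailf M) (zr K)) <= 2 * rr ^ (S M) / (1 - rr).
Proof.
  pose proof (zr_tail M K). pose proof rr_lt1. pose proof rr_pos.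
  assert (0 <= 2 * rr ^ S M / (1 - rr)). { apply Rmult_le_pos. pose proof (pow_le rr (S M)). lra. left; apply Rinv_0_lt_compat; lra. }
  assert (0 <= 2 * rr ^ S K / (1 - rr)). { apply Rmult_le_pos. pose proof (pow_le rr (S K)). lra. left; apply Rinv_0_lt_compat; lra. }
  destruct (K <=? M)%nat; lra.
Qed.

Lemma zr_one K : Rsum (map (fun j => if (Z.abs j <=? 0)%Z then 1 else 0) (zr K)) = 1.
Proof.
  induction K as [|K IH]. simpl. ring. rewrite Rsum_zr_S, IH.
  replace (Z.abs (- Z.of_nat (S K)) <=? 0)%Z with false by (symmetry; apply Z.leb_gt; lia).
  replace (Z.abs (Z.of_nat (S K)) <=? 0)%Z with false by (symmetry; apply Z.leb_gt; lia). ring.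
Qed.

Lemma zr_full K : Rsum (map (fun j => rr ^ (Z.abs_nat j)) (zr K)) <= 1 + 2 * rr / (1 - rr).
Proof.
  assert (E : forall j, rr ^ (Z.abs_nat j) = tailf 0 j + (if (Z.abs j <=? 0)%Z then 1 else 0)).
  { intro j. unfold tailf. simpl Z.of_nat. destruct (Z.leb_spec (Z.abs j) 0) as [Hj|Hj].
    - replace (Z.abs_nat j) with 0%nat by lia. simpl. ring.
    - ring. }
  rewrite (map_ext _ _ E), Rsum_plus. pose proof (zr_tail' 0 K). simpl (rr ^ 1) in H.
  rewrite Rmult_1_r in H.
  pose proof (zr_one K). lra.
Qed.

Definition box (K : nat) : list (Z * Z) := list_prod (zr K) (zr K).

Lemma In_box K j k : In (j, k) (box K) <-> (Z.abs j <= Z.of_nat K /\ Z.abs k <= Z.of_nat K)%Z.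
Proof. unfold box. rewrite in_prod_iff, !In_zr. tauto. Qed.

Lemma NoDup_box K : NoDup (box K).
Proof. apply NoDup_list_prod'; apply NoDup_zr. Qed.

Lemma rr_pow_pos n : 0 <= rr ^ n.
Proof. apply pow_le. left; apply rr_pos. Qed.

Lemma tailf_ge0 M j : 0 <= tailf M j.
Proof. unfold tailf. destruct (_ <=? _)%Z. lra. apply rr_pow_pos. Qed.

Lemma compare2 (G : Z * Z -> CC) (c1 c2 : R) M K L1 L2 :
  0 <= c1 -> 0 <= c2 ->
  (forall j k, nrm (G (j, k)) <= (c1 * rr ^ (Z.abs_nat j)) * (c2 * rr ^ (Z.abs_nat k))) ->
  NoDup L1 -> NoDup L2 -> incl L1 (box K) -> incl L2 (box K) -> incl (box M) L1 -> incl (box M) L2 ->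
  nrm (Csub (Csum (map G L1)) (Csum (map G L2))) <=
    c1 * c2 * (2 * (2 * rr ^ (S M) / (1 - rr)) * (1 + 2 * rr / (1 - rr))).
Proof.
  intros Hc1 Hc2 HG N1 N2 I1 I2 J1 J2.
  rewrite (Csum_indicator G (box K) L1), (Csum_indicator G (box K) L2) by (auto; apply NoDup_box).
  unfold Csub. rewrite <- Csum_map_opp, <- Csum_map_add.
  eapply Rle_trans. apply nrm_Csum.
  eapply Rle_trans. apply (Rsum_le _ (fun p => c1 * c2 * (tailf M (fst p) * rr ^ (Z.abs_nat (snd p)) +
                                                    rr ^ (Z.abs_nat (fst p)) * tailf M (snd p)))).
  - intros [j k] Hp. simpl fst; simpl snd.
    assert (E : Cadd (Cmul (chi L1 (j, k)) (G (j, k))) (Copp (Cmul (chi L2 (j, k)) (G (j, k)))) =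
                Cmul (Csub (chi L1 (j, k)) (chi L2 (j, k))) (G (j, k))) by ring.
    rewrite E. clear E. pose proof (tailf_ge0 M j). pose proof (tailf_ge0 M k).
    pose proof (rr_pow_pos (Z.abs_nat j)). pose proof (rr_pow_pos (Z.abs_nat k)).
    destruct (in_dec pdec (j, k) (box M)) as [Hin|Hin].
    + unfold chi. destruct (in_dec pdec (j, k) L1) as [|n1]; [|exfalso; apply n1; auto].
      destruct (in_dec pdec (j, k) L2) as [|n2]; [|exfalso; apply n2; auto].
      replace (Csub C1 C1) with C0 by ceq. replace (Cmul C0 (G (j, k))) with C0 by ring.
      unfold nrm; simpl. rewrite Rabs_R0. assert (0 <= c1 * c2) by nra. assert (0 <= tailf M j * rr ^ Z.abs_nat k + rr ^ Z.abs_nat j * tailf M k) by nra. nra.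
    + eapply Rle_trans. apply nrm_mul.
      assert (Hd : nrm (Csub (chi L1 (j, k)) (chi L2 (j, k))) <= 1).
      { assert (n0 : nrm C0 = 0) by (unfold nrm; simpl; rewrite Rabs_R0; ring).
        assert (n1 : nrm C1 = 1) by (unfold nrm; simpl; rewrite Rabs_R0, Rabs_R1; ring).
        assert (n2 : nrm (Copp C1) = 1) by (rewrite nrm_opp; auto).
        unfold chi. destruct (in_dec pdec (j, k) L1), (in_dec pdec (j, k) L2).
        - replace (Csub C1 C1) with C0 by ceq. lra.
        - replace (Csub C1 C0) with C1 by ceq. lra.
        - replace (Csub C0 C1) with (Copp C1) by ceq. lra.
        - replace (Csub C0 C0) with C0 by ceq. lra. }
      pose proof (nrm_ge0 (G (j, k))). specialize (HG j k).
      assert (nrm (G (j, k)) <= c1 * c2 * (tailf M j * rr ^ Z.abs_nat k + rr ^ Z.abs_nat j * tailf M k)).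
      { rewrite In_box in Hin. unfold tailf.
        destruct (Z.leb_spec (Z.abs j) (Z.of_nat M)), (Z.leb_spec (Z.abs k) (Z.of_nat M)).
        - exfalso; apply Hin; lia.
        - nra.
        - nra.
        - nra. }
      nra.
  - rewrite Rsum_scal, Rsum_plus. unfold box.
    rewrite (Rsum_prod (tailf M) (fun k => rr ^ Z.abs_nat k)), (Rsum_prod (fun j => rr ^ Z.abs_nat j) (tailf M)).
    pose proof (zr_tail' M K). pose proof (zr_full K).
    assert (0 <= Rsum (map (tailf M) (zr K))) by (apply Rsum_ge0; intro; pose proof (tailf_ge0 M x); lra).
    assert (0 <= Rsum (map (fun k => rr ^ Z.abs_nat k) (zr K))) by (apply Rsum_ge0; intro; pose proof (rr_pow_pos (Z.abs_nat x)); lra).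
    assert (0 <= c1 * c2) by nra.
    apply Rmult_le_compat_l; auto. nra.
Qed.

Section TJ.
Context (tau : CC).
Notation t := (theta_term tau).

Definition exq (m : Z) (z : CC) : CC :=
  Cexp (Cadd (Cmul (Cmul (Cmul (CR PI) Ci) tau) (CR (IZR m * IZR m / 2)))
             (Cmul (Cmul (Cmul (CR 2) (CR PI)) Ci) (Cmul (CR (IZR m)) z))).

Definition GG (x y : CC) (p : Z * Z) : CC := Cmul (t (Cadd x y) (fst p)) (t (Csub x y) (snd p)).

Lemma I1 x y a b : GG x y ((a + b)%Z, (a - b)%Z) = Copp (Cmul (exq (2 * a + 1) x) (exq (2 * b) y)).
Proof.
  unfold GG, theta_term, exq; simpl fst; simpl snd. rewrite <- !Cexp_add.
  match goal with |- Cexp ?E = Copp (Cexp ?F) =>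
    replace E with (Cadd F (mkC 0 (2 * (IZR a * PI) + PI))) end.
  - rewrite Cexp_add, Cexp_oddpi. ring.
  - rewrite ?plus_IZR, ?minus_IZR, ?mult_IZR. apply CC_ext; cbn [re im Cadd Cmul Csub Copp CR C0 C1 Cnat CZ Cdiv Cinv Ci]. all: lra.
Qed.

Lemma I2 x y a b : GG x y ((a + b)%Z, (a - b - 1)%Z) = Cmul (exq (2 * a) x) (exq (2 * b + 1) y).
Proof.
  unfold GG, theta_term, exq; simpl fst; simpl snd. rewrite <- !Cexp_add.
  match goal with |- Cexp ?E = Cexp ?F =>
    replace E with (Cadd F (mkC 0 (2 * (IZR a * PI)))) end.
  - rewrite Cexp_add, Cexp_2kpi. ring.
  - rewrite ?plus_IZR, ?minus_IZR, ?mult_IZR. apply CC_ext; cbn [re im Cadd Cmul Csub Copp CR C0 C1 Cnat CZ Cdiv Cinv Ci]; lra.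
Qed.

Definition Be N z := Csum (map (fun n => exq (2 * n) z) (zr N)).
Definition Bo N z := Csum (map (fun n => exq (2 * n + 1) z) (zr N)).
Definition DN N x y := Csub (Cmul (Be N x) (Bo N y)) (Cmul (Bo N x) (Be N y)).
Definition phi1 (p : Z * Z) : Z * Z := ((fst p + snd p)%Z, (fst p - snd p)%Z).
Definition phi2 (p : Z * Z) : Z * Z := ((fst p + snd p)%Z, (fst p - snd p - 1)%Z).
Definition UU N := map phi2 (box N) ++ map phi1 (box N).

Lemma sum_U N x y : Csum (map (GG x y) (UU N)) = DN N x y.
Proof.
  unfold UU, DN. rewrite map_app, Csum_app', !map_map.
  rewrite (Csum_ext _ (fun p => Cmul (exq (2 * fst p) x) (exq (2 * snd p + 1) y))).
  rewrite (Csum_ext (fun p => GG x y (phi1 p)) (fun p => Copp (Cmul (exq (2 * fst p + 1) x) (exq (2 * snd p) y)))).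
  - rewrite Csum_map_opp. unfold box.
    rewrite (Csum_prod (fun a => exq (2 * a) x) (fun b => exq (2 * b + 1) y)).
    rewrite (Csum_prod (fun a => exq (2 * a + 1) x) (fun b => exq (2 * b) y)).
    unfold Be, Bo. ring.
  - intros [a b] _. apply I1.
  - intros [a b] _. apply I2.
Qed.

Lemma sum_box N x y : Csum (map (GG x y) (box N)) = Cmul (theta_partial tau (Cadd x y) N) (theta_partial tau (Csub x y) N).
Proof.
  unfold GG, box. rewrite (Csum_prod (t (Cadd x y)) (t (Csub x y))), !theta_partial_zr. reflexivity.
Qed.

Lemma NoDup_UU N : NoDup (UU N).
Proof.
  unfold UU. apply NoDup_app.
  - apply NoDup_map_inj. intros [a b] [c d] E. unfold phi2 in E. simpl in E. inversion E. f_equal; lia. apply NoDup_box.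
  - apply NoDup_map_inj. intros [a b] [c d] E. unfold phi1 in E. simpl in E. inversion E. f_equal; lia. apply NoDup_box.
  - intros p H1 H2. apply in_map_iff in H1, H2. destruct H1 as [[a b] [E1 _]]. destruct H2 as [[c d] [E2 _]].
    subst. unfold phi1, phi2 in E2. simpl in E2. inversion E2. lia.
Qed.

Lemma incl_UU N : incl (UU N) (box (2 * N + 1)).
Proof.
  intros [j k] H. unfold UU in H. apply in_app_or in H. apply In_box.
  destruct H as [H|H]; apply in_map_iff in H; destruct H as [[a b] [E Hab]]; apply In_box in Hab;
  unfold phi1, phi2 in E; simpl in E; inversion E; subst; lia.
Qed.

Lemma box_UU N : incl (box N) (UU N).
Proof.
  intros [j k] H. apply In_box in H. unfold UU. apply in_or_app.
  destruct (Z.Even_or_Odd (j + k)) as [[a Ha]|[a Ha]].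
  - right. apply in_map_iff. exists (a, (j - a)%Z). split. unfold phi1; simpl. f_equal; lia.
    apply In_box. lia.
  - left. apply in_map_iff. exists ((a + 1)%Z, (j - a - 1)%Z). split. unfold phi2; simpl. f_equal; lia.
    apply In_box. lia.
Qed.

Lemma box_mono N K : (N <= K)%nat -> incl (box N) (box K).
Proof. intros HNK [j k] H. apply In_box in H. apply In_box. lia. Qed.

Context (Htau : 0 < im tau).

Lemma DN_close N x y :
  nrm (Csub (Cmul (theta_partial tau (Cadd x y) N) (theta_partial tau (Csub x y) N)) (DN N x y)) <=
  Ct tau (Cadd x y) * Ct tau (Csub x y) * (2 * (2 * rr ^ (S N) / (1 - rr)) * (1 + 2 * rr / (1 - rr))).
Proof.
  rewrite <- sum_box, <- sum_U.
  apply compare2 with (K := (2 * N + 1)%nat).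
  - unfold Ct. pose proof (exp_pos ((2 * PI * Rabs (im (Cadd x y)) + 1) ^ 2 / (4 * PI * im tau) + / 2)). lra.
  - unfold Ct. pose proof (exp_pos ((2 * PI * Rabs (im (Csub x y)) + 1) ^ 2 / (4 * PI * im tau) + / 2)). lra.
  - intros j k. unfold GG; simpl fst; simpl snd. eapply Rle_trans. apply nrm_mul.
    apply Rmult_le_compat; try apply nrm_ge0; apply t_bound; auto.
  - apply NoDup_box.
  - apply NoDup_UU.
  - apply box_mono. lia.
  - apply incl_UU.
  - apply incl_refl.
  - apply box_UU.
Qed.
End TJ.

Lemma rr_small (c : R) : 0 <= c -> forall eps, 0 < eps -> exists N, forall n, (n >= N)%nat -> c * rr ^ n < eps.
Proof.
  intros Hc eps He. pose proof rr_pos. pose proof rr_lt1.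
  destruct (pow_lt_1_zero rr ltac:(rewrite Rabs_right; lra) (eps / (c + 1))) as [N HN].
  { apply Rdiv_lt_0_compat; lra. }
  exists N. intros n Hn. specialize (HN n Hn). rewrite Rabs_right in HN by (apply Rle_ge, rr_pow_pos).
  pose proof (rr_pow_pos n).
  apply Rle_lt_trans with ((c + 1) * rr ^ n). nra.
  apply Rmult_lt_reg_l with (/ (c + 1)). apply Rinv_0_lt_compat; lra.
  rewrite <- Rmult_assoc, Rinv_l, Rmult_1_l by lra. unfold Rdiv in HN. lra.
Qed.

Lemma Un_cv_rr (c : R) : 0 <= c -> Un_cv (fun n => c * rr ^ n) 0.
Proof.
  intros Hc eps He. destruct (rr_small c Hc eps He) as [N HN]. exists N. intros n Hn.
  unfold R_dist. rewrite Rminus_0_r, Rabs_right. auto. apply Rle_ge, Rmult_le_pos; auto. apply rr_pow_pos.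
Qed.

Section TK.
Context (tau : CC) (Htau : 0 < im tau).
Notation t := (theta_term tau).

Lemma Csum_zeros (l : list Z) (g : Z -> CC) : (forall j, In j l -> g j = C0) -> Csum (map g l) = C0.
Proof. induction l; simpl; intros H. reflexivity. rewrite H, IHl; auto. ring. Qed.

Lemma Sp_split z N d :
  Csum (map (t z) (zr (N + d))) = Cadd (Csum (map (t z) (zr N)))
     (Csum (map (fun j => if (Z.abs j <=? Z.of_nat N)%Z then C0 else t z j) (zr (N + d)))).
Proof.
  induction d as [|d IH].
  - rewrite Nat.add_0_r. rewrite (Csum_zeros (zr N) (fun j => if (Z.abs j <=? Z.of_nat N)%Z then C0 else t z j)). ring. intros j Hj. apply In_zr in Hj.
    replace (Z.abs j <=? Z.of_nat N)%Z with true by (symmetry; apply Z.leb_le; lia). reflexivity.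
  - replace (N + S d)%nat with (S (N + d)) by lia. cbn [zr].
    rewrite !map_cons, !Csum_cons, !map_app, !Csum_app'. cbn [map]. rewrite !Csum_cons. rewrite IH.
    replace (Z.abs (- Z.of_nat (S (N + d))) <=? Z.of_nat N)%Z with false by (symmetry; apply Z.leb_gt; lia).
    replace (Z.abs (Z.of_nat (S (N + d))) <=? Z.of_nat N)%Z with false by (symmetry; apply Z.leb_gt; lia).
    change (Csum []) with C0. ring.
Qed.

Lemma Sp_tail z N d :
  nrm (Csub (theta_partial tau z (N + d)) (theta_partial tau z N)) <= Ct tau z * (2 * rr ^ (S N) / (1 - rr)).
Proof.
  rewrite !theta_partial_zr, Sp_split.
  assert (E : forall a b, Csub (Cadd a b) a = b) by (intros; ring). rewrite E.
  eapply Rle_trans. apply nrm_Csum.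
  eapply Rle_trans. apply (Rsum_le _ (fun j => Ct tau z * tailf N j)).
  - intros j _. unfold tailf. destruct (Z.abs j <=? Z.of_nat N)%Z.
    + unfold nrm; simpl. rewrite Rabs_R0. lra.
    + apply t_bound; auto.
  - rewrite Rsum_scal. apply Rmult_le_compat_l. unfold Ct. pose proof (exp_pos ((2 * PI * Rabs (im z) + 1) ^ 2 / (4 * PI * im tau) + / 2)). lra.
    apply zr_tail'.
Qed.

Lemma Sp_cauchy_re z : Cauchy_crit (fun n => re (theta_partial tau z n)).
Proof.
  intros eps He. pose proof rr_pos. pose proof rr_lt1.
  assert (Hc : 0 <= Ct tau z * 2 * rr / (1 - rr)).
  { unfold Ct. pose proof (exp_pos ((2 * PI * Rabs (im z) + 1) ^ 2 / (4 * PI * im tau) + / 2)).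
    unfold Rdiv. apply Rmult_le_pos. nra. left; apply Rinv_0_lt_compat; lra. }
  destruct (rr_small _ Hc (eps / 2) ltac:(lra)) as [N HN].
  exists N. intros n m Hn Hm. unfold R_dist.
  pose proof (Sp_tail z N (n - N)) as T1. pose proof (Sp_tail z N (m - N)) as T2.
  replace (N + (n - N))%nat with n in T1 by lia. replace (N + (m - N))%nat with m in T2 by lia.
  pose proof (Rabs_re_le (Csub (theta_partial tau z n) (theta_partial tau z N))).
  pose proof (Rabs_re_le (Csub (theta_partial tau z m) (theta_partial tau z N))).
  simpl in H1, H2. specialize (HN N (le_n _)).
  assert (Ct tau z * (2 * rr ^ S N / (1 - rr)) = Ct tau z * 2 * rr / (1 - rr) * rr ^ N) by (simpl; field; lra).
  replace (re (theta_partial tau z n) - re (theta_partial tau z m)) with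
    ((re (theta_partial tau z n) + - re (theta_partial tau z N)) - (re (theta_partial tau z m) + - re (theta_partial tau z N))) by ring.
  pose proof (Rabs_triang (re (theta_partial tau z n) + - re (theta_partial tau z N)) (- (re (theta_partial tau z m) + - re (theta_partial tau z N)))).
  rewrite Rabs_Ropp in H4. unfold Rminus. lra.
Qed.
Lemma Sp_cauchy_im z : Cauchy_crit (fun n => im (theta_partial tau z n)).
Proof.
  intros eps He. pose proof rr_pos. pose proof rr_lt1.
  assert (Hc : 0 <= Ct tau z * 2 * rr / (1 - rr)).
  { unfold Ct. pose proof (exp_pos ((2 * PI * Rabs (im z) + 1) ^ 2 / (4 * PI * im tau) + / 2)).
    unfold Rdiv. apply Rmult_le_pos. nra. left; apply Rinv_0_lt_compat; lra. }
  destruct (rr_small _ Hc (eps / 2) ltac:(lra)) as [N HN].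
  exists N. intros n m Hn Hm. unfold R_dist.
  pose proof (Sp_tail z N (n - N)) as T1. pose proof (Sp_tail z N (m - N)) as T2.
  replace (N + (n - N))%nat with n in T1 by lia. replace (N + (m - N))%nat with m in T2 by lia.
  pose proof (Rabs_im_le (Csub (theta_partial tau z n) (theta_partial tau z N))).
  pose proof (Rabs_im_le (Csub (theta_partial tau z m) (theta_partial tau z N))).
  simpl in H1, H2. specialize (HN N (le_n _)).
  assert (Ct tau z * (2 * rr ^ S N / (1 - rr)) = Ct tau z * 2 * rr / (1 - rr) * rr ^ N) by (simpl; field; lra).
  replace (im (theta_partial tau z n) - im (theta_partial tau z m)) with
    ((im (theta_partial tau z n) + - im (theta_partial tau z N)) - (im (theta_partial tau z m) + - im (theta_partial tau z N))) by ring.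
  pose proof (Rabs_triang (im (theta_partial tau z n) + - im (theta_partial tau z N)) (- (im (theta_partial tau z m) + - im (theta_partial tau z N)))).
  rewrite Rabs_Ropp in H4. unfold Rminus. lra.
Qed.

Lemma theta_lim z : Ccv (fun N => theta_partial tau z N) (Copp (theta tau z)).
Proof.
  destruct (R_complete _ (Sp_cauchy_re z)) as [lr Hr].
  destruct (R_complete _ (Sp_cauchy_im z)) as [li Hi].
  unfold theta.
  assert (Hex : exists L : CC, Ccv (fun N => theta_partial tau z N) L) by (exists (mkC lr li); split; simpl; auto).
  pose proof (epsilon_spec (inhabits C0) _ Hex) as HP.
  assert (E : forall e, Copp (Copp e) = e) by (intro; ring). rewrite E. exact HP.
Qed.

Lemma DN_lim x y : Ccv (fun N => DN tau N x y) (Cmul (theta tau (Cadd x y)) (theta tau (Csub x y))).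
Proof.
  pose proof rr_pos. pose proof rr_lt1.
  set (c := Ct tau (Cadd x y) * Ct tau (Csub x y) * (2 * (2 * rr / (1 - rr)) * (1 + 2 * rr / (1 - rr)))).
  assert (Hc : 0 <= c).
  { unfold c, Ct. pose proof (exp_pos ((2 * PI * Rabs (im (Cadd x y)) + 1) ^ 2 / (4 * PI * im tau) + / 2)).
    pose proof (exp_pos ((2 * PI * Rabs (im (Csub x y)) + 1) ^ 2 / (4 * PI * im tau) + / 2)).
    assert (0 <= 2 * rr / (1 - rr)) by (unfold Rdiv; apply Rmult_le_pos; [lra | left; apply Rinv_0_lt_compat; lra]).
    apply Rmult_le_pos; [apply Rmult_le_pos; lra | apply Rmult_le_pos; lra]. }
  apply (Ccv_close _ (fun N => Cmul (theta_partial tau (Cadd x y) N) (theta_partial tau (Csub x y) N)) _ (fun N => c * rr ^ N)).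
  - apply Un_cv_rr; auto.
  - intro N. rewrite <- nrm_opp.
    replace (Copp (Csub (DN tau N x y) (Cmul (theta_partial tau (Cadd x y) N) (theta_partial tau (Csub x y) N))))
      with (Csub (Cmul (theta_partial tau (Cadd x y) N) (theta_partial tau (Csub x y) N)) (DN tau N x y)) by ring.
    eapply Rle_trans. apply DN_close; auto. unfold c. simpl (rr ^ S N). right. field. lra.
  - replace (Cmul (theta tau (Cadd x y)) (theta tau (Csub x y))) with
      (Cmul (Copp (theta tau (Cadd x y))) (Copp (theta tau (Csub x y)))) by ring.
    apply Ccv_mul; apply theta_lim.
Qed.

Lemma theta_Ftt : forall x y u w,
  Cmul (Cmul (theta tau (Cadd x y)) (theta tau (Csub x y))) (Cmul (theta tau (Cadd u w)) (theta tau (Csub u w))) =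
  Cadd (Cmul (Cmul (theta tau (Cadd x w)) (theta tau (Csub x w))) (Cmul (theta tau (Cadd u y)) (theta tau (Csub u y))))
       (Cmul (Cmul (theta tau (Cadd x u)) (theta tau (Csub x u))) (Cmul (theta tau (Cadd y w)) (theta tau (Csub y w)))).
Proof.
  intros x y u w.
  eapply Ccv_unique.
  - apply Ccv_mul; apply DN_lim.
  - eapply Ccv_ext. 2: apply Ccv_add; apply Ccv_mul; apply DN_lim.
    intro N. unfold DN. ring.
Qed.
End TK.

Lemma Csin_exp z : Csin z = Cmul (Csub (Cexp (Cmul Ci z)) (Cexp (Copp (Cmul Ci z)))) (mkC 0 (- / 2)).
Proof.
  unfold Csin, cosh, sinh. apply CC_ext; cbn [re im Cmul Csub Cadd Copp Cexp Ci].
  - replace (0 * re z - 1 * im z) with (- im z) by ring.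
    replace (- (0 * re z - 1 * im z)) with (im z) by ring.
    replace (0 * im z + 1 * re z) with (re z) by ring.
    replace (- (0 * im z + 1 * re z)) with (- re z) by ring.
    rewrite cos_neg, sin_neg, Ropp_involutive. lra.
  - replace (0 * re z - 1 * im z) with (- im z) by ring.
    replace (- (0 * re z - 1 * im z)) with (im z) by ring.
    replace (0 * im z + 1 * re z) with (re z) by ring.
    replace (- (0 * im z + 1 * re z)) with (- re z) by ring.
    rewrite cos_neg, sin_neg, Ropp_involutive. lra.
Qed.

Lemma Cexp_ext a b : a = b -> Cexp a = Cexp b.
Proof. intros ->; reflexivity. Qed.

Lemma Cexp_inv w : Cmul (Cexp w) (Cexp (Copp w)) = C1.
Proof.
  rewrite <- Cexp_add. replace (Cadd w (Copp w)) with C0 by ring.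
  apply CC_ext; simpl; rewrite exp_0, ?cos_0, ?sin_0; ring.
Qed.

Lemma Csin_diff a b : Cmul (Csin (Cadd a b)) (Csin (Csub a b)) =
  Csub (Cmul (Csin a) (Csin a)) (Cmul (Csin b) (Csin b)).
Proof.
  rewrite !Csin_exp.
  rewrite (Cexp_ext (Cmul Ci (Cadd a b)) (Cadd (Cmul Ci a) (Cmul Ci b))) by ring.
  rewrite (Cexp_ext (Copp (Cmul Ci (Cadd a b))) (Cadd (Copp (Cmul Ci a)) (Copp (Cmul Ci b)))) by ring.
  rewrite (Cexp_ext (Cmul Ci (Csub a b)) (Cadd (Cmul Ci a) (Copp (Cmul Ci b)))) by ring.
  rewrite (Cexp_ext (Copp (Cmul Ci (Csub a b))) (Cadd (Copp (Cmul Ci a)) (Cmul Ci b))) by ring.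
  rewrite !Cexp_add.
  pose proof (Cexp_inv (Cmul Ci a)) as HA. pose proof (Cexp_inv (Cmul Ci b)) as HB.
  set (A := Cexp (Cmul Ci a)) in *. set (A' := Cexp (Copp (Cmul Ci a))) in *.
  set (B := Cexp (Cmul Ci b)) in *. set (B' := Cexp (Copp (Cmul Ci b))) in *.
  set (c := mkC 0 (- / 2)).
  match goal with |- ?L = ?R =>
    assert (E : Csub L R = Cmul (Cmul c c) (Csub (Cmul (Csub (Cadd (Cmul A A) (Cmul A' A')) (CR 2)) (Csub (Cmul B B') C1))
                                     (Cmul (Csub (Cadd (Cmul B B) (Cmul B' B')) (CR 2)) (Csub (Cmul A A') C1)))) by (unfold c; ceq) end.
  rewrite HA, HB in E.
  match goal with |- ?L = ?R => transitivity (Cadd R (Csub L R)) end. ring.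
  rewrite E. ring.
Qed.

Lemma sin_Ftt tau : Ftt (ff SinF tau).
Proof.
  assert (K : forall x y, Cmul (ff SinF tau (Cadd x y)) (ff SinF tau (Csub x y)) =
                          Csub (Cmul (ff SinF tau x) (ff SinF tau x)) (Cmul (ff SinF tau y) (ff SinF tau y))).
  { intros x y. simpl. rewrite <- Csin_diff. f_equal; f_equal; ceq. }
  intros x y u w. rewrite !K. ring.
Qed.

Theorem lemma3p5 (fc : fchoice) (eta tau : CC) (Htau : 0 < im tau)
  (J : nat) (HJ : (0 < J)%nat) (i1 j1 i2 j2 : nat) (K K' : list bool)
  (HK : length K = J) (HK' : length K' = J)
  (HjK : ones K = j2) (HjK' : ones K' = j2)
  (v lam Lam : CC)
  (* non-degeneracy: all denominators occurring in the weights are nonzero *)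
  (H2eta : ff fc tau (Cmul (CR 2) eta) <> C0)
  (Hden1 : forall k : nat, (k < J)%nat ->
     ff fc tau (Csub (Cmul eta Lam) (Cadd v (Cmul (Cmul (CR 2) eta) (Cnat k)))) <> C0)
  (Hden2 : forall m : Z, (Z.abs m <= Z.of_nat J)%Z ->
     ff fc tau (Cadd lam (Cmul (Cmul (CR 2) eta) (CZ m))) <> C0) :
  WJsum fc tau eta i1 j1 i2 K v lam Lam = WJsum fc tau eta i1 j1 i2 K' v lam Lam.
Proof.
  refine (main_generic fc eta tau _ J i1 j1 i2 j2 K K' HK HK' HjK HjK' v lam Lam H2eta Hden1 Hden2).
  destruct fc.
  - intros x y u w. exact (theta_Ftt tau Htau x y u w).
  - apply sin_Ftt.
Qed.
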